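(* Let $\mathcal F=\{f_0,f_1,\ldots\}$ be a (countable) family of bounded arithmetic functions with $\mathrm{AE}(\mathcal F)<+\infty$. Then for every $\epsilon>0$ there exists $\delta>0$ such that for every family $\mathcal G=\{g_0,g_1,\ldots\}\subseteq l^\infty(\mathbb N)$ (indexed by the same index set) with $\sup_{i}\|g_i-f_i\|_{l^\infty}<\delta$, one has $\mathrm{AE}(\mathcal G)>\mathrm{AE}(\mathcal F)-\epsilon$.
   Context: $\mathbb N=\{0,1,2,\ldots\}$ and $l^\infty(\mathbb N)$ is the C*-algebra of bounded complex-valued functions on $\mathbb N$ with the sup norm. Let $\sigma_A:l^\infty(\mathbb N)\to l^\infty(\mathbb N)$ be $(\sigma_Af)(n)=f(n+1)$. An anqie is a unital C*-subalgebra $\mathcal A\subseteq l^\infty(\mathbb N)$ with $\sigma_A(\mathcal A)\subseteq\mathcal A$. For $\mathcal F\subseteq l^\infty(\mathbb N)$, $\mathcal A_{\mathcal F}$ denotes the smallest anqie containing $\mathcal F$. For an anqie $\mathcal A$ with maximal ideal space $X$ (weak* topology), the map $A:X\to X$, $(A\rho)(f)=\rho(\sigma_Af)$, is continuous; the anqie entropy $\mathrm{AE}(\mathcal A)\in[0,\infty]$ is the topological entropy $h(A)$, and $\mathrm{AE}(\mathcal F)=\mathrm{AE}(\mathcal A_{\mathcal F})$. *)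

(* Defs.v *)
From Stdlib Require Import Reals List.
Open Scope R_scope.

Record C := mkC { Re : R ; Im : R }.
Definition C0 : C := mkC 0 0.
Definition C1 : C := mkC 1 0.
Definition Cadd (z w : C) : C := mkC (Re z + Re w) (Im z + Im w).
Definition Csub (z w : C) : C := mkC (Re z - Re w) (Im z - Im w).
Definition Cmul (z w : C) : C :=
  mkC (Re z * Re w - Im z * Im w) (Re z * Im w + Im z * Re w).
Definition Cconj (z : C) : C := mkC (Re z) (- Im z).
Definition Cmod (z : C) : R := sqrt (Re z * Re z + Im z * Im z).

Definition arith := nat -> C.
Definition linf_bounded (f : arith) : Prop := exists M : R, forall n, Cmod (f n) <= M.
Definition shift (f : arith) : arith := fun n => f (S n).
Fixpoint shiftn (j : nat) (f : arith) : arith :=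
  match j with O => f | S k => shift (shiftn k f) end.

(** * Anqies: unital (norm-closed) C*-subalgebras of l^infty(N) stable under shift.
    A subset of l^infty(N) is represented by a predicate on arith. *)
Definition is_anqie (A : arith -> Prop) : Prop :=
  (forall f, A f -> linf_bounded f) /\
  A (fun _ => C1) /\
  (forall f g, A f -> A g -> A (fun n => Cadd (f n) (g n))) /\
  (forall (c : C) f, A f -> A (fun n => Cmul c (f n))) /\
  (forall f g, A f -> A g -> A (fun n => Cmul (f n) (g n))) /\
  (forall f, A f -> A (fun n => Cconj (f n))) /\
  (forall f, linf_bounded f ->
     (forall eps, eps > 0 -> exists g, A g /\ forall n, Cmod (Csub (f n) (g n)) <= eps) ->
     A f) /\
  (forall f, A f -> A (shift f)).

Definition gen_anqie (F : nat -> arith) : arith -> Prop :=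
  fun f => forall A, is_anqie A -> (forall i, A (F i)) -> A f.

(** A character is represented by a function on all of arith, only its values on A
    matter (all notions below only depend on these values). *)
Definition is_char (A : arith -> Prop) (rho : arith -> C) : Prop :=
  rho (fun _ => C1) = C1 /\
  (forall f g, A f -> A g -> rho (fun n => Cadd (f n) (g n)) = Cadd (rho f) (rho g)) /\
  (forall c f, A f -> rho (fun n => Cmul c (f n)) = Cmul c (rho f)) /\
  (forall f g, A f -> A g -> rho (fun n => Cmul (f n) (g n)) = Cmul (rho f) (rho g)).

Definition wopen (A : arith -> Prop) (U : (arith -> C) -> Prop) : Prop :=
  forall rho, is_char A rho -> U rho ->
    exists (l : list arith) (eps : R), eps > 0 /\ (forall f, In f l -> A f) /\
      forall rho', is_char A rho' ->
        (forall f, In f l -> Cmod (Csub (rho' f) (rho f)) < eps) -> U rho'.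

Definition open_cover (A : arith -> Prop) (Us : list ((arith -> C) -> Prop)) : Prop :=
  (forall U, In U Us -> wopen A U) /\
  (forall rho, is_char A rho -> exists U, In U Us /\ U rho).

Definition Amap_iter (j : nat) (rho : arith -> C) : arith -> C :=
  fun f => rho (shiftn j f).

(** The element of the join cover U v A^{-1}U v ... v A^{-(n-1)}U indexed by the word w *)
Definition word_set (Us : list ((arith -> C) -> Prop)) (n : nat) (w : list nat)
  (rho : arith -> C) : Prop :=
  forall j, (j < n)%nat -> nth (nth j w 0%nat) Us (fun _ => False) (Amap_iter j rho).

Definition covers_with (A : arith -> Prop) (Us : list ((arith -> C) -> Prop))
  (n k : nat) : Prop :=
  exists ws : list (list nat), length ws = k /\
    forall rho, is_char A rho -> exists w, In w ws /\ word_set Us n w rho.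

Definition is_covnum (A : arith -> Prop) (Us : list ((arith -> C) -> Prop))
  (n N : nat) : Prop :=
  covers_with A Us n N /\ forall k, covers_with A Us n k -> (N <= k)%nat.

Definition cover_entropy (A : arith -> Prop) (Us : list ((arith -> C) -> Prop))
  (h : R) : Prop :=
  exists N : nat -> nat, (forall n, is_covnum A Us n (N n)) /\
    Un_cv (fun n => ln (INR (N (S n))) / INR (S n)) h.

Inductive ER := ERfin (r : R) | ERinf.
Definition ER_le (x y : ER) : Prop :=
  match x, y with
  | _, ERinf => True
  | ERinf, ERfin _ => False
  | ERfin a, ERfin b => a <= b
  end.
Definition ER_lt (x y : ER) : Prop :=
  match x, y with
  | ERfin _, ERinf => True
  | ERinf, _ => False
  | ERfin a, ERfin b => a < b
  end.

Definition is_AE (A : arith -> Prop) (e : ER) : Prop :=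
  (forall Us h, open_cover A Us -> cover_entropy A Us h -> ER_le (ERfin h) e) /\
  (forall b : R,
     (forall Us h, open_cover A Us -> cover_entropy A Us h -> h <= b) ->
     ER_le e (ERfin b)).

(* Main.v *)
Require Import Defs.
From Stdlib Require Import Reals List Lra Lia Psatz Classical ClassicalEpsilon FunctionalExtensionality Rtopology Cantor ZArith Arith Wf_nat.
Import Defs.
Open Scope R_scope.

Lemma Ceq : forall z w : C, Re z = Re w -> Im z = Im w -> z = w.
Proof. intros [a b] [c d]; simpl; intros; subst; reflexivity. Qed.

Lemma sq_le : forall a b, 0 <= a -> 0 <= b -> a*a <= b*b -> a <= b.
Proof. intros; nra. Qed.

Lemma Cmod_ge0 : forall z, 0 <= Cmod z.
Proof. intros; apply sqrt_pos. Qed.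

Lemma Cmod_sq : forall z, Cmod z * Cmod z = Re z * Re z + Im z * Im z.
Proof. intros; unfold Cmod; apply sqrt_sqrt; nra. Qed.

Lemma Re_le : forall z, Rabs (Re z) <= Cmod z.
Proof.
  intros; apply sq_le; [apply Rabs_pos|apply Cmod_ge0|].
  rewrite Cmod_sq. rewrite <- Rabs_mult. rewrite Rabs_right by nra. nra.
Qed.

Lemma Im_le : forall z, Rabs (Im z) <= Cmod z.
Proof.
  intros; apply sq_le; [apply Rabs_pos|apply Cmod_ge0|].
  rewrite Cmod_sq. rewrite <- Rabs_mult. rewrite Rabs_right by nra. nra.
Qed.

Lemma Cmod_le_sum : forall z, Cmod z <= Rabs (Re z) + Rabs (Im z).
Proof.
  intros; apply sq_le; [apply Cmod_ge0| pose proof (Rabs_pos (Re z)); pose proof (Rabs_pos (Im z)); lra|].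
  rewrite Cmod_sq. pose proof (Rabs_pos (Re z)); pose proof (Rabs_pos (Im z)).
  assert (Re z * Re z = Rabs (Re z) * Rabs (Re z)) by (rewrite <- Rabs_mult; rewrite Rabs_right; nra).
  assert (Im z * Im z = Rabs (Im z) * Rabs (Im z)) by (rewrite <- Rabs_mult; rewrite Rabs_right; nra).
  nra.
Qed.

Lemma Cmod_mul : forall z w, Cmod (Cmul z w) = Cmod z * Cmod w.
Proof.
  intros; unfold Cmod, Cmul; simpl. rewrite <- sqrt_mult by nra. f_equal; ring.
Qed.

Lemma Cmod_add : forall z w, Cmod (Cadd z w) <= Cmod z + Cmod w.
Proof.
  intros. apply sq_le; [apply Cmod_ge0| pose proof (Cmod_ge0 z); pose proof (Cmod_ge0 w); lra|].
  pose proof (Cmod_sq z); pose proof (Cmod_sq w); pose proof (Cmod_sq (Cadd z w)).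
  pose proof (Cmod_ge0 z); pose proof (Cmod_ge0 w).
  destruct z as [a b]; destruct w as [c d]; simpl in *.
  assert (HCS : a*c + b*d <= Cmod (mkC a b) * Cmod (mkC c d)).
  { destruct (Rle_dec (a*c+b*d) 0). nra.
    apply sq_le; [lra|nra|]. 
    replace (Cmod (mkC a b) * Cmod (mkC c d) * (Cmod (mkC a b) * Cmod (mkC c d)))
      with ((Cmod (mkC a b) * Cmod (mkC a b)) * (Cmod (mkC c d) * Cmod (mkC c d))) by ring.
    rewrite H, H0. pose proof (Rle_0_sqr (a*d-b*c)); unfold Rsqr in *; nra. }
  nra.
Qed.

Definition Cneg (z : C) := mkC (- Re z) (- Im z).

Lemma Cmod_Csub_sym : forall z w, Cmod (Csub z w) = Cmod (Csub w z).
Proof. intros; unfold Cmod, Csub; simpl; f_equal; ring. Qed.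

Lemma Cmod_sub_tri : forall a b c, Cmod (Csub a c) <= Cmod (Csub a b) + Cmod (Csub b c).
Proof.
  intros. replace (Csub a c) with (Cadd (Csub a b) (Csub b c)).
  apply Cmod_add. apply Ceq; simpl; ring.
Qed.

Lemma Cmod_conj : forall z, Cmod (Cconj z) = Cmod z.
Proof. intros; unfold Cmod, Cconj; simpl; f_equal; ring. Qed.

Lemma Cmod_C1 : Cmod C1 = 1.
Proof. unfold Cmod, C1; simpl. replace (1*1+0*0) with 1 by ring. apply sqrt_1. Qed.

Lemma Cmod_C0 : Cmod C0 = 0.
Proof. unfold Cmod, C0; simpl. replace (0*0+0*0) with 0 by ring. apply sqrt_0. Qed.

Lemma Cmod_eq0 : forall z, Cmod z = 0 -> z = C0.
Proof.
  intros z H. pose proof (Cmod_sq z). rewrite H in H0.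
  apply Ceq; simpl; nra.
Qed.

Lemma Cmod_real : forall r, Cmod (mkC r 0) = Rabs r.
Proof.
  intros. apply Rle_antisym. 
  - pose proof (Cmod_le_sum (mkC r 0)); simpl in H. rewrite Rabs_R0 in H. lra.
  - apply (Re_le (mkC r 0)).
Qed.

Definition Cinv (z : C) : C :=
  mkC (Re z / (Re z * Re z + Im z * Im z)) (- Im z / (Re z * Re z + Im z * Im z)).

Lemma Cinv_r : forall z, z <> C0 -> Cmul z (Cinv z) = C1.
Proof.
  intros z Hz. assert (Re z * Re z + Im z * Im z <> 0).
  { intro H. apply Hz. apply Ceq; simpl; nra. }
  apply Ceq; unfold Cmul, Cinv; simpl; field; auto.
Qed.


Lemma Cmul_comm : forall z w, Cmul z w = Cmul w z.
Proof. intros; apply Ceq; simpl; ring. Qed.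

Lemma Cmod_inv : forall z, z <> C0 -> Cmod (Cinv z) * Cmod z = 1.
Proof.
  intros. rewrite <- Cmod_mul, Cmul_comm, Cinv_r; auto. apply Cmod_C1.
Qed.

Lemma Cmod_pos : forall z, z <> C0 -> 0 < Cmod z.
Proof.
  intros. destruct (Cmod_ge0 z); auto. exfalso; apply H; apply Cmod_eq0; auto.
Qed.


Section Anq.
Variable A : arith -> Prop.
Hypothesis HA : is_anqie A.

Lemma anq_bdd : forall f, A f -> linf_bounded f. Proof using HA. destruct HA as (a1&a2&a3&a4&a5&a6&a7&a8); auto. Qed.
Lemma anq_one : A (fun _ => C1). Proof using HA. destruct HA as (a1&a2&a3&a4&a5&a6&a7&a8); auto. Qed.
Lemma anq_add : forall f g, A f -> A g -> A (fun n => Cadd (f n) (g n)). Proof using HA. destruct HA as (a1&a2&a3&a4&a5&a6&a7&a8); auto. Qed.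
Lemma anq_scal : forall c f, A f -> A (fun n => Cmul c (f n)). Proof using HA. destruct HA as (a1&a2&a3&a4&a5&a6&a7&a8); auto. Qed.
Lemma anq_mul : forall f g, A f -> A g -> A (fun n => Cmul (f n) (g n)). Proof using HA. destruct HA as (a1&a2&a3&a4&a5&a6&a7&a8); auto. Qed.
Lemma anq_conj : forall f, A f -> A (fun n => Cconj (f n)). Proof using HA. destruct HA as (a1&a2&a3&a4&a5&a6&a7&a8); auto. Qed.
Lemma anq_closed : forall f, linf_bounded f ->
     (forall eps, eps > 0 -> exists g, A g /\ forall n, Cmod (Csub (f n) (g n)) <= eps) ->
     A f. Proof using HA. destruct HA as (a1&a2&a3&a4&a5&a6&a7&a8); auto. Qed.
Lemma anq_shift : forall f, A f -> A (shift f). Proof using HA. destruct HA as (a1&a2&a3&a4&a5&a6&a7&a8); auto. Qed.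

Lemma anq_ext : forall f g, A f -> (forall n, f n = g n) -> A g.
Proof using HA. intros f g H E. replace g with f; auto. apply functional_extensionality; auto. Qed.

Lemma anq_const : forall c, A (fun _ => c).
Proof using HA.
  intros. apply anq_ext with (fun n => Cmul c ((fun _ => C1) n)).
  apply anq_scal, anq_one. intros; apply Ceq; simpl; ring.
Qed.

Lemma anq_sub : forall f g, A f -> A g -> A (fun n => Csub (f n) (g n)).
Proof using HA.
  intros. apply anq_ext with (fun n => Cadd (f n) ((fun n => Cmul (mkC (-1) 0) (g n)) n)).
  apply anq_add; auto. apply anq_scal; auto. intros; apply Ceq; simpl; ring.
Qed.

Lemma anq_shiftn : forall j f, A f -> A (shiftn j f).
Proof using HA. induction j; simpl; intros; auto. apply anq_shift; auto. Qed.

Variable rho : arith -> C.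
Hypothesis Hr : is_char A rho.

Lemma ch_one : rho (fun _ => C1) = C1. Proof using HA Hr. destruct Hr as (a1&a2&a3&a4); auto. Qed.
Lemma ch_add : forall f g, A f -> A g -> rho (fun n => Cadd (f n) (g n)) = Cadd (rho f) (rho g).
Proof using HA Hr. destruct Hr as (a1&a2&a3&a4); auto. Qed.
Lemma ch_scal : forall c f, A f -> rho (fun n => Cmul c (f n)) = Cmul c (rho f).
Proof using HA Hr. destruct Hr as (a1&a2&a3&a4); auto. Qed.
Lemma ch_mul : forall f g, A f -> A g -> rho (fun n => Cmul (f n) (g n)) = Cmul (rho f) (rho g).
Proof using HA Hr. destruct Hr as (a1&a2&a3&a4); auto. Qed.

Lemma ch_ext : forall f g, (forall n, f n = g n) -> rho f = rho g.
Proof using HA Hr. intros. f_equal. apply functional_extensionality; auto. Qed.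

Lemma ch_const : forall c, rho (fun _ => c) = c.
Proof using HA Hr.
  intros. rewrite (ch_ext (fun _ => c) (fun n => Cmul c ((fun _ => C1) n))).
  rewrite ch_scal, ch_one. apply Ceq; simpl; ring. apply anq_one.
  intros; apply Ceq; simpl; ring.
Qed.

Lemma ch_sub : forall f g, A f -> A g -> rho (fun n => Csub (f n) (g n)) = Csub (rho f) (rho g).
Proof using HA Hr.
  intros. rewrite (ch_ext _ (fun n => Cadd (f n) ((fun n => Cmul (mkC (-1) 0) (g n)) n))).
  rewrite ch_add, ch_scal; auto. apply Ceq; simpl; ring. apply anq_scal; auto.
  intros; apply Ceq; simpl; ring.
Qed.

End Anq.

Lemma char_shift : forall A rho, is_anqie A -> is_char A rho -> is_char A (fun f => rho (shift f)).
Proof.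
  intros A rho HA Hr. destruct Hr as (H1 & H2 & H3 & H4).
  repeat split.
  - apply H1.
  - intros f g Hf Hg; exact (H2 _ _ (anq_shift A HA f Hf) (anq_shift A HA g Hg)).
  - intros c f Hf; exact (H3 c _ (anq_shift A HA f Hf)).
  - intros f g Hf Hg; exact (H4 _ _ (anq_shift A HA f Hf) (anq_shift A HA g Hg)).
Qed.


Lemma shiftn_shift : forall j f, shiftn j (shift f) = shift (shiftn j f).
Proof. induction j; intros; auto. change (shift (shiftn j (shift f)) = shift (shiftn (S j) f)). rewrite IHj; auto. Qed.

Lemma shiftn_add : forall m p f, shiftn m (shiftn p f) = shiftn (m + p) f.
Proof. induction m; intros; auto. change (shift (shiftn m (shiftn p f)) = shift (shiftn (m + p) f)). rewrite IHm; auto. Qed.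

Lemma shiftn_app : forall j f n, shiftn j f n = f (j + n)%nat.
Proof. induction j; simpl; intros; auto. unfold shift. rewrite IHj. f_equal; lia. Qed.

Lemma char_Amap : forall A j rho, is_anqie A -> is_char A rho -> is_char A (Amap_iter j rho).
Proof.
  intros A j. induction j; intros rho HA Hr.
  - unfold Amap_iter; simpl. exact Hr.
  - assert (E : Amap_iter (S j) rho = Amap_iter j (fun f => rho (shift f))).
    { reflexivity. }
    rewrite E. apply IHj; auto. apply char_shift; auto.
Qed.

Lemma Amap_Amap : forall m p rho, Amap_iter p (Amap_iter m rho) = Amap_iter (m + p) rho.
Proof.
  intros. unfold Amap_iter. apply functional_extensionality; intro f.
  rewrite shiftn_add; auto.
Qed.

Definition ev (m : nat) : arith -> C := fun f => f m.

Lemma ev_char : forall A m, is_char A (ev m).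
Proof. intros; unfold ev; repeat split; auto. Qed.

Lemma Amap_ev : forall j m, Amap_iter j (ev m) = ev (j + m).
Proof.
  intros. unfold Amap_iter, ev. apply functional_extensionality; intro f.
  apply shiftn_app.
Qed.

Lemma bounded_anqie : is_anqie linf_bounded.
Proof.
  repeat split.
  - auto.
  - exists 1; intros; rewrite Cmod_C1; lra.
  - intros f g [M1 H1] [M2 H2]. exists (M1 + M2); intros.
    eapply Rle_trans. apply Cmod_add. specialize (H1 n); specialize (H2 n); lra.
  - intros c f [M H]. exists (Cmod c * M); intros. rewrite Cmod_mul.
    apply Rmult_le_compat_l; auto. apply Cmod_ge0.
  - intros f g [M1 H1] [M2 H2]. exists (M1 * M2); intros. rewrite Cmod_mul.
    apply Rmult_le_compat; auto; apply Cmod_ge0.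
  - intros f [M H]; exists M; intros; rewrite Cmod_conj; auto.
  - auto.
  - intros f [M H]; exists M; intros; apply H.
Qed.

Lemma gen_anqie_anqie : forall F, (forall i, linf_bounded (F i)) -> is_anqie (gen_anqie F).
Proof.
  intros F HF. unfold gen_anqie. repeat split.
  - intros f H. apply H. apply bounded_anqie. auto.
  - intros A HA _. apply (anq_one A HA).
  - intros f g Hf Hg A HA HFA. apply (anq_add A HA); [apply Hf|apply Hg]; auto.
  - intros c f Hf A HA HFA. apply (anq_scal A HA); apply Hf; auto.
  - intros f g Hf Hg A HA HFA. apply (anq_mul A HA); [apply Hf|apply Hg]; auto.
  - intros f Hf A HA HFA. apply (anq_conj A HA); apply Hf; auto.
  - intros f Hb Hap A HA HFA. apply (anq_closed A HA); auto.
    intros eps He. destruct (Hap eps He) as [g [Hg Hd]]. exists g; split; auto. apply Hg; auto.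
  - intros f Hf A HA HFA. apply (anq_shift A HA); apply Hf; auto.
Qed.

Lemma gen_contains : forall F i, gen_anqie F (F i).
Proof. intros F i A _ H; apply H. Qed.


Lemma C0_neq_C1 : C0 <> C1.
Proof. intro H. assert (Re C0 = Re C1) by (rewrite H; auto). simpl in H0. lra. Qed.

Lemma neumann : forall A u q, is_anqie A -> A u -> 0 <= q < 1 ->
  (forall n, Cmod (Csub C1 (u n)) <= q) ->
  exists v, A v /\ forall n, Cmul (u n) (v n) = C1.
Proof.
  intros A u q HA Hu Hq Hd.
  assert (Hlow : forall n, 1 - q <= Cmod (u n)).
  { intro n. pose proof (Cmod_sub_tri C1 (u n) C0). 
    replace (Csub C1 C0) with C1 in H by (apply Ceq; simpl; ring).
    replace (Csub (u n) C0) with (u n) in H by (apply Ceq; simpl; ring).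
    rewrite Cmod_C1 in H. specialize (Hd n). lra. }
  assert (Hnz : forall n, u n <> C0).
  { intros n E. specialize (Hlow n). rewrite E, Cmod_C0 in Hlow. lra. }
  set (v := fun n => Cinv (u n)).
  set (B := / (1 - q)).
  assert (HB : 0 < B) by (unfold B; apply Rinv_0_lt_compat; lra).
  assert (Huv : forall n, Cmul (u n) (v n) = C1) by (intro n; apply Cinv_r; auto).
  assert (Hvb : forall n, Cmod (v n) <= B).
  { intro n. pose proof (Cmod_inv (u n) (Hnz n)). specialize (Hlow n).
    fold (v n) in H. pose proof (Cmod_ge0 (v n)). unfold B.
    apply Rmult_le_reg_r with (1 - q). lra. rewrite Rinv_l by lra. nra. }
  assert (Hd_A : A (fun n => Csub C1 (u n))) by (apply (anq_sub A HA); auto; apply (anq_const A HA); auto).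
  assert (Happ : forall K, exists S, A S /\ forall n, Cmod (Csub (v n) (S n)) <= q ^ K * B).
  { induction K.
    - exists (fun _ => C0). split. apply (anq_const A HA); auto. intro n. simpl.
      replace (Csub (v n) C0) with (v n) by (apply Ceq; simpl; ring). rewrite Rmult_1_l; auto.
    - destruct IHK as [S [HS HSb]].
      exists (fun n => Cadd C1 (Cmul (Csub C1 (u n)) (S n))). split.
      + apply (anq_add A HA); auto. apply (anq_const A HA); auto. apply (anq_mul A HA); auto.
      + intro n. 
        replace (Csub (v n) (Cadd C1 (Cmul (Csub C1 (u n)) (S n))))
          with (Cmul (Csub C1 (u n)) (Csub (v n) (S n))).
        rewrite Cmod_mul. simpl. rewrite Rmult_assoc.
        apply Rmult_le_compat; auto; try apply Cmod_ge0.
        specialize (Huv n). destruct (u n) as [a b]; destruct (v n) as [c d]; destruct (S n) as [e f].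
        unfold Cmul, C1 in Huv. injection Huv; intros E1 E2.
        apply Ceq; simpl; nra. }
  exists v; split; auto.
  apply (anq_closed A HA); auto.
  - exists B; auto.
  - intros eps He. destruct (pow_lt_1_zero q ltac:(rewrite Rabs_right; lra) (eps / B)) as [N HN].
    apply Rdiv_lt_0_compat; lra.
    destruct (Happ N) as [S [HS HSb]]. exists S; split; auto.
    intro n. eapply Rle_trans. apply HSb.
    specialize (HN N (le_n N)). rewrite Rabs_right in HN. 
    apply Rmult_lt_compat_r with (r := B) in HN; auto.
    unfold Rdiv in HN. rewrite Rmult_assoc, Rinv_l, Rmult_1_r in HN; lra.
    apply Rle_ge, pow_le; lra.
Qed.

Lemma char_bound : forall A rho f M, is_anqie A -> is_char A rho -> A f ->
  (forall n, Cmod (f n) <= M) -> Cmod (rho f) <= M.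
Proof.
  intros A rho f M HA Hr Hf HM.
  destruct (Rle_dec (Cmod (rho f)) M) as [|Hn]; auto. exfalso.
  assert (HM0 : 0 <= M) by (pose proof (Cmod_ge0 (f 0%nat)); specialize (HM 0%nat); lra).
  set (l := rho f) in *.
  assert (Hl : l <> C0). { intro E. rewrite E, Cmod_C0 in Hn. lra. }
  set (u := fun n => Csub C1 (Cmul (Cinv l) (f n))).
  assert (HuA : A u) by (apply (anq_sub A HA); auto; [apply (anq_const A HA); auto| apply (anq_scal A HA); auto]).
  pose proof (Cmod_inv l Hl) as Hil.
  destruct (neumann A u (M * Cmod (Cinv l)) HA HuA) as [v [HvA Hv]].
  - split. apply Rmult_le_pos; auto; apply Cmod_ge0.
    apply Rmult_lt_reg_r with (Cmod l). lra. rewrite Rmult_assoc, Hil. lra.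
  - intro n. unfold u. replace (Csub C1 (Csub C1 (Cmul (Cinv l) (f n)))) with (Cmul (Cinv l) (f n))
      by (apply Ceq; simpl; ring).
    rewrite Cmod_mul, Rmult_comm. apply Rmult_le_compat_r; auto. apply Cmod_ge0.
  - assert (Hru : rho u = C0).
    { unfold u. rewrite (ch_sub A HA rho Hr); auto. rewrite (ch_const A HA rho Hr), (ch_scal A HA rho Hr); auto. fold l.
      rewrite Cmul_comm, Cinv_r; auto. apply Ceq; simpl; ring.
      apply (anq_const A HA); auto. apply (anq_scal A HA); auto. }
    assert (E : rho (fun n => Cmul (u n) (v n)) = rho (fun _ => C1)) by (apply (ch_ext A HA rho Hr); auto).
    rewrite (ch_mul A HA rho Hr), (ch_one A HA rho Hr), Hru in E; auto.
    apply C0_neq_C1. rewrite <- E. apply Ceq; simpl; ring.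
Qed.

Lemma char_real : forall A rho h, is_anqie A -> is_char A rho -> A h ->
  (forall n, Im (h n) = 0) -> Im (rho h) = 0.
Proof.
  intros A rho h HA Hr Hh Him.
  destruct (anq_bdd A HA h Hh) as [M HM].
  destruct (Req_dec (Im (rho h)) 0) as [|Hy]; auto. exfalso.
  set (y := Im (rho h)) in *. set (x := Re (rho h)).
  set (t := (M*M + 1) / (2*y)).
  set (ht := fun n => Cadd (h n) (mkC 0 t)).
  assert (HtA : A ht) by (apply (anq_add A HA); auto; apply (anq_const A HA); auto).
  set (Bt := sqrt (M*M + t*t)).
  assert (HBt : Bt * Bt = M*M + t*t) by (apply sqrt_sqrt; nra).
  assert (HB0 : 0 <= Bt) by apply sqrt_pos.
  assert (Hb : forall n, Cmod (ht n) <= Bt).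
  { intro n. apply sq_le; auto. apply Cmod_ge0. rewrite HBt, Cmod_sq. unfold ht; simpl.
    rewrite Him. specialize (HM n). pose proof (Cmod_sq (h n)). rewrite Him in H.
    pose proof (Cmod_ge0 (h n)). nra. }
  pose proof (char_bound A rho ht Bt HA Hr HtA Hb).
  unfold ht in H. rewrite (ch_add A HA rho Hr) in H; auto. rewrite (ch_const A HA rho Hr) in H; auto.
  assert (Cmod (Cadd (rho h) (mkC 0 t)) * Cmod (Cadd (rho h) (mkC 0 t)) <= Bt * Bt).
  { pose proof (Cmod_ge0 (Cadd (rho h) (mkC 0 t))). nra. }
  rewrite Cmod_sq, HBt in H0. simpl in H0. fold x y in H0.
  assert (2 * y * t = M*M + 1) by (unfold t; field; auto).
  nra. apply (anq_const A HA); auto.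
Qed.

Lemma char_conj : forall A rho f, is_anqie A -> is_char A rho -> A f ->
  rho (fun n => Cconj (f n)) = Cconj (rho f).
Proof.
  intros A rho f HA Hr Hf.
  set (u := fun n => Cmul (mkC (1/2) 0) (Cadd (f n) (Cconj (f n)))).
  set (w := fun n => Cmul (mkC 0 (-1/2)) (Csub (f n) (Cconj (f n)))).
  assert (HuA : A u) by (apply (anq_scal A HA); auto; apply (anq_add A HA); auto; apply (anq_conj A HA); auto).
  assert (HwA : A w) by (apply (anq_scal A HA); auto; apply (anq_sub A HA); auto; apply (anq_conj A HA); auto).
  assert (Hu : Im (rho u) = 0) by (apply (char_real A); auto; intro n; unfold u; simpl; field).
  assert (Hw : Im (rho w) = 0) by (apply (char_real A); auto; intro n; unfold w; simpl; field).
  assert (E1 : rho f = rho (fun n => Cadd (u n) (Cmul (mkC 0 1) (w n)))).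
  { apply (ch_ext A HA rho Hr); intro n. unfold u, w. apply Ceq; simpl; field. }
  assert (E2 : rho (fun n => Cconj (f n)) = rho (fun n => Cadd (u n) (Cmul (mkC 0 (-1)) (w n)))).
  { apply (ch_ext A HA rho Hr); intro n. unfold u, w. apply Ceq; simpl; field. }
  rewrite E1, E2. rewrite !(ch_add A HA rho Hr), !(ch_scal A HA rho Hr); auto; try (apply (anq_scal A HA); auto).
  destruct (rho u) as [a b]; destruct (rho w) as [c d]; simpl in *; subst.
  apply Ceq; simpl; ring.
Qed.

Definition sqterm (rho : arith -> C) (f : arith) (n : nat) : C :=
  Cmul (Csub (f n) (rho f)) (Cconj (Csub (f n) (rho f))).

Fixpoint sqsum (rho : arith -> C) (l : list arith) (n : nat) : C :=
  match l with nil => C0 | f :: l' => Cadd (sqterm rho f n) (sqsum rho l' n) end.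

Lemma sqterm_eq : forall rho f n, sqterm rho f n =
   mkC (Cmod (Csub (f n) (rho f)) * Cmod (Csub (f n) (rho f))) 0.
Proof. intros. unfold sqterm. rewrite Cmod_sq. apply Ceq; simpl; ring. Qed.

Lemma density : forall A rho l s, is_anqie A -> is_char A rho ->
  (forall f, In f l -> A f) -> s > 0 ->
  exists m, forall f, In f l -> Cmod (Csub (f m) (rho f)) < s.
Proof.
  intros A rho l s HA Hr Hl Hs.
  apply NNPP; intro Hne.
  assert (Hbad : forall m, exists f, In f l /\ s <= Cmod (Csub (f m) (rho f))).
  { intro m. apply NNPP; intro H2. apply Hne. exists m. intros f Hf.
    apply Rnot_le_lt. intro H3. apply H2. exists f; auto. }
  assert (Hsum : forall l', (forall f, In f l' -> A f) ->
     A (sqsum rho l') /\ rho (sqsum rho l') = C0 /\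
     (exists Mt, forall n, Im (sqsum rho l' n) = 0 /\ 0 <= Re (sqsum rho l' n) <= Mt) /\
     (forall n f, In f l' -> s <= Cmod (Csub (f n) (rho f)) -> s * s <= Re (sqsum rho l' n))).
  { induction l' as [|f l' IH]; intros Hl'.
    - simpl. repeat split.
      + apply (anq_const A HA); auto.
      + apply (ch_const A HA rho Hr); auto.
      + exists 0; intros; simpl; repeat split; lra.
      + intros n f [].
    - destruct IH as (IA & IR & [Mt IM] & IL). intros; apply Hl'; simpl; auto.
      assert (HfA : A f) by (apply Hl'; simpl; auto).
      assert (HtA : A (sqterm rho f)).
      { apply (anq_mul A HA); auto. apply (anq_sub A HA); auto. apply (anq_const A HA); auto.
        apply (anq_conj A HA); auto. apply (anq_sub A HA); auto. apply (anq_const A HA); auto. }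
      destruct (anq_bdd A HA f HfA) as [Mf HMf].
      repeat split.
      + apply (anq_add A HA); auto.
      + change (rho (fun n => Cadd (sqterm rho f n) (sqsum rho l' n)) = C0).
        rewrite (ch_add A HA rho Hr); auto. rewrite IR. unfold sqterm. rewrite (ch_mul A HA rho Hr); auto.
        rewrite (ch_sub A HA rho Hr); auto. rewrite (ch_const A HA rho Hr); auto.
        apply Ceq; simpl; ring.
        apply (anq_const A HA); auto. apply (anq_sub A HA); auto. apply (anq_const A HA); auto.
        apply (anq_conj A HA); auto. apply (anq_sub A HA); auto. apply (anq_const A HA); auto.
      + exists ((Mf + Cmod (rho f)) * (Mf + Cmod (rho f)) + Mt). intro n.
        destruct (IM n) as [I1 [I2 I3]]. cbn [sqsum]. rewrite sqterm_eq; cbn [Re Im Cadd].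
        pose proof (Cmod_sub_tri (f n) C0 (rho f)).
        replace (Csub (f n) C0) with (f n) in H by (apply Ceq; simpl; ring).
        replace (Cmod (Csub C0 (rho f))) with (Cmod (rho f)) in H.
        2:{ unfold Cmod; simpl; f_equal; ring. }
        specialize (HMf n). pose proof (Cmod_ge0 (Csub (f n) (rho f))).
        repeat split; try lra. nra. nra.
      + intros n g Hg Hs2. cbn [sqsum]. rewrite sqterm_eq; cbn [Re Im Cadd].
        destruct (IM n) as [I1 [I2 I3]].
        destruct Hg as [<-|Hg].
        * nra.
        * specialize (IL n g Hg Hs2). pose proof (Cmod_ge0 (Csub (g n) (rho g))).
          nra. }
  destruct (Hsum l Hl) as (GA & GR & [Mt GM] & GL).
  assert (HMt : s * s <= Mt).
  { destruct (Hbad 0%nat) as [f [Hf Hfs]]. specialize (GL 0%nat f Hf Hfs). 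
    destruct (GM 0%nat); lra. }
  set (u := fun n => Cmul (mkC (/ Mt) 0) (sqsum rho l n)).
  assert (HuA : A u) by (apply (anq_scal A HA); auto).
  assert (Hs2 : 0 < s * s) by nra.
  destruct (neumann A u (1 - s * s / Mt) HA HuA) as [v [HvA Hv]].
  - split. 
    + assert (s * s / Mt <= 1) by (apply Rmult_le_reg_r with Mt; [lra|]; unfold Rdiv; rewrite Rmult_assoc, Rinv_l; lra); lra.
    + assert (0 < s * s / Mt) by (apply Rdiv_lt_0_compat; lra). lra.
  - intro n. unfold u. destruct (GM n) as [I1 [I2 I3]].
    destruct (Hbad n) as [f [Hf Hfs]]. specialize (GL n f Hf Hfs).
    replace (Csub C1 (Cmul (mkC (/ Mt) 0) (sqsum rho l n))) with (mkC (1 - Re (sqsum rho l n) / Mt) 0)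
      by (apply Ceq; simpl; [field; lra| rewrite I1; ring]).
    rewrite Cmod_real. rewrite Rabs_right.
    + apply Rplus_le_compat_l, Ropp_le_contravar. unfold Rdiv.
      apply Rmult_le_compat_r; auto. left; apply Rinv_0_lt_compat; lra.
    + apply Rle_ge. assert (Re (sqsum rho l n) / Mt <= 1) by (apply Rmult_le_reg_r with Mt; [lra|]; unfold Rdiv; rewrite Rmult_assoc, Rinv_l; lra); lra.
  - assert (Hru : rho u = C0).
    { unfold u. rewrite (ch_scal A HA rho Hr), GR; auto. apply Ceq; simpl; ring. }
    assert (E : rho (fun n => Cmul (u n) (v n)) = rho (fun _ => C1)) by (apply (ch_ext A HA rho Hr); auto).
    rewrite (ch_mul A HA rho Hr), (ch_one A HA rho Hr), Hru in E; auto.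
    apply C0_neq_C1. rewrite <- E. apply Ceq; simpl; ring.
Qed.


Definition close (F : nat -> arith) (rho rho' : arith -> C) (K : nat) (s : R) : Prop :=
  forall i j, (i <= K)%nat -> (j <= K)%nat ->
    Cmod (Csub (rho (shiftn j (F i))) (rho' (shiftn j (F i)))) < s.

Lemma close_mono : forall F rho rho' K s K' s', close F rho rho' K s ->
  (K' <= K)%nat -> s <= s' -> close F rho rho' K' s'.
Proof. unfold close; intros. eapply Rlt_le_trans. apply H; lia. auto. Qed.

Definition nice (F : nat -> arith) (f : arith) : Prop :=
  forall eps, eps > 0 -> exists K s, s > 0 /\ forall rho rho',
    is_char (gen_anqie F) rho -> is_char (gen_anqie F) rho' ->
    close F rho rho' K s -> Cmod (Csub (rho f) (rho' f)) < eps.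

Lemma Cmod_add_diff : forall a b c d, Cmod (Csub (Cadd a b) (Cadd c d)) <= Cmod (Csub a c) + Cmod (Csub b d).
Proof.
  intros. replace (Csub (Cadd a b) (Cadd c d)) with (Cadd (Csub a c) (Csub b d)).
  apply Cmod_add. apply Ceq; simpl; ring.
Qed.

Lemma Cmod_mul_diff : forall a b c d, Cmod (Csub (Cmul a b) (Cmul c d)) <=
   Cmod a * Cmod (Csub b d) + Cmod d * Cmod (Csub a c).
Proof.
  intros. replace (Csub (Cmul a b) (Cmul c d)) with (Cadd (Cmul a (Csub b d)) (Cmul d (Csub a c))).
  rewrite <- !Cmod_mul. apply Cmod_add. apply Ceq; simpl; ring.
Qed.

Lemma nice_two : forall F f g eps, nice F f -> nice F g -> eps > 0 ->
  exists K s, s > 0 /\ forall rho rho',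
    is_char (gen_anqie F) rho -> is_char (gen_anqie F) rho' ->
    close F rho rho' K s -> Cmod (Csub (rho f) (rho' f)) < eps /\ Cmod (Csub (rho g) (rho' g)) < eps.
Proof.
  intros F f g eps Hf Hg He.
  destruct (Hf eps He) as [K1 [s1 [Hs1 H1]]]. destruct (Hg eps He) as [K2 [s2 [Hs2 H2]]].
  exists (Nat.max K1 K2), (Rmin s1 s2). split. apply Rmin_glb_lt; auto.
  intros. split.
  - apply H1; auto. eapply close_mono; eauto. lia. apply Rmin_l.
  - apply H2; auto. eapply close_mono; eauto. lia. apply Rmin_r.
Qed.

Section Nice.
Variable F : nat -> arith.
Hypothesis HF : forall i, linf_bounded (F i).
Let A := gen_anqie F.
Let HA : is_anqie A := gen_anqie_anqie F HF.

Definition T f := A f /\ nice F f.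

Lemma T_anqie : is_anqie T.
Proof.
  unfold T. split; [|split; [|split; [|split; [|split; [|split; [|split]]]]]].
  - intros f [Hf _]. apply (anq_bdd A HA); auto.
  - split. apply (anq_one A HA).
    intros eps He. exists 0%nat, 1. split; [lra|]. intros rho rho' Hr Hr' _.
    rewrite (ch_one A HA rho Hr), (ch_one A HA rho' Hr').
    replace (Csub C1 C1) with C0 by (apply Ceq; simpl; ring). rewrite Cmod_C0; lra.
  - intros f g [Hf Nf] [Hg Ng]. split. apply (anq_add A HA); auto. intros eps He.
    destruct (nice_two F f g (eps/2) Nf Ng ltac:(lra)) as [K [s [Hs H]]].
    exists K, s; split; auto. intros rho rho' Hr Hr' Hc. destruct (H rho rho' Hr Hr' Hc).
    rewrite (ch_add A HA rho Hr), (ch_add A HA rho' Hr'); auto.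
    eapply Rle_lt_trans. apply Cmod_add_diff. lra.
  - intros c f [Hf Nf]. split. apply (anq_scal A HA); auto. intros eps He.
    assert (Hc : 0 < Cmod c + 1) by (pose proof (Cmod_ge0 c); lra).
    destruct (Nf (eps / (Cmod c + 1))) as [K [s [Hs H]]]. apply Rdiv_lt_0_compat; lra.
    exists K, s; split; auto. intros rho rho' Hr Hr' Hcl.
    rewrite (ch_scal A HA rho Hr), (ch_scal A HA rho' Hr'); auto.
    replace (Csub (Cmul c (rho f)) (Cmul c (rho' f))) with (Cmul c (Csub (rho f) (rho' f)))
      by (apply Ceq; simpl; ring).
    rewrite Cmod_mul. specialize (H rho rho' Hr Hr' Hcl).
    pose proof (Cmod_ge0 c). pose proof (Cmod_ge0 (Csub (rho f) (rho' f))).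
    apply Rle_lt_trans with ((Cmod c + 1) * Cmod (Csub (rho f) (rho' f))). nra.
    apply Rmult_lt_reg_l with (/ (Cmod c + 1)). apply Rinv_0_lt_compat; lra.
    rewrite <- Rmult_assoc, Rinv_l, Rmult_1_l by lra. unfold Rdiv in H. lra.
  - intros f g [Hf Nf] [Hg Ng]. split. apply (anq_mul A HA); auto. intros eps He.
    destruct (anq_bdd A HA f Hf) as [Mf HMf]. destruct (anq_bdd A HA g Hg) as [Mg HMg].
    assert (HMf0 : 0 <= Mf) by (specialize (HMf 0%nat); pose proof (Cmod_ge0 (f 0%nat)); lra).
    assert (HMg0 : 0 <= Mg) by (specialize (HMg 0%nat); pose proof (Cmod_ge0 (g 0%nat)); lra).
    set (e1 := eps / (Mf + Mg + 1)).
    assert (He1 : 0 < e1) by (apply Rdiv_lt_0_compat; lra).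
    assert (He1' : (Mf + Mg) * e1 < eps).
    { assert (e1 * (Mf + Mg + 1) = eps) by (unfold e1; field; lra). nra. }
    destruct (nice_two F f g e1 Nf Ng He1) as [K [s [Hs H]]].
    exists K, s; split; auto. intros rho rho' Hr Hr' Hc. destruct (H rho rho' Hr Hr' Hc).
    rewrite (ch_mul A HA rho Hr), (ch_mul A HA rho' Hr'); auto.
    eapply Rle_lt_trans. apply Cmod_mul_diff.
    pose proof (char_bound A rho f Mf HA Hr Hf HMf).
    pose proof (char_bound A rho' g Mg HA Hr' Hg HMg).
    pose proof (Cmod_ge0 (rho f)). pose proof (Cmod_ge0 (rho' g)).
    pose proof (Cmod_ge0 (Csub (rho g) (rho' g))). pose proof (Cmod_ge0 (Csub (rho f) (rho' f))).
    apply Rle_lt_trans with (Mf * e1 + Mg * e1); [|lra].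
    apply Rplus_le_compat; apply Rmult_le_compat; auto; lra.
  - intros f [Hf Nf]. split. apply (anq_conj A HA); auto. intros eps He. destruct (Nf eps He) as [K [s [Hs H]]].
    exists K, s; split; auto. intros rho rho' Hr Hr' Hc.
    rewrite (char_conj A rho f HA Hr Hf), (char_conj A rho' f HA Hr' Hf).
    replace (Csub (Cconj (rho f)) (Cconj (rho' f))) with (Cconj (Csub (rho f) (rho' f)))
      by (apply Ceq; simpl; ring).
    rewrite Cmod_conj; auto.
  - intros f Hb Hap.
    assert (HfA : A f).
    { apply (anq_closed A HA); auto. intros e He'. destruct (Hap e He') as [g [[Hg _] Hd]]. eauto. }
    split; auto. intros eps He.
    destruct (Hap (eps / 4)) as [g [[Hg Ng] Hd]]. lra.
    destruct (Ng (eps / 4)) as [K [s [Hs H]]]. lra.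
    exists K, s; split; auto. intros rho rho' Hr Hr' Hc.
    assert (Hfg : A (fun n => Csub (f n) (g n))) by (apply (anq_sub A HA); auto).
    pose proof (char_bound A rho _ (eps/4) HA Hr Hfg Hd) as B1.
    pose proof (char_bound A rho' _ (eps/4) HA Hr' Hfg Hd) as B2.
    rewrite (ch_sub A HA rho Hr) in B1; auto. rewrite (ch_sub A HA rho' Hr') in B2; auto.
    specialize (H rho rho' Hr Hr' Hc).
    pose proof (Cmod_sub_tri (rho f) (rho g) (rho' f)).
    pose proof (Cmod_sub_tri (rho g) (rho' g) (rho' f)).
    rewrite (Cmod_Csub_sym (rho' g) (rho' f)) in H1. lra.
  - intros f [Hf Nf]. split. apply (anq_shift A HA); auto. intros eps He. destruct (Nf eps He) as [K [s [Hs H]]].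
    exists (S K), s; split; auto. intros rho rho' Hr Hr' Hc.
    apply (H (fun f => rho (shift f)) (fun f => rho' (shift f))).
    apply char_shift; auto. apply char_shift; auto.
    intros i j Hi Hj. apply (Hc i (S j)); lia.
Qed.

Lemma T_F : forall i, T (F i).
Proof.
  intro i. split. apply gen_contains.
  intros eps He. exists i, eps. split; auto. intros rho rho' _ _ Hc.
  apply (Hc i 0%nat); lia.
Qed.

Lemma all_nice : forall f, A f -> nice F f.
Proof. intros f Hf. apply (Hf T T_anqie T_F). Qed.

End Nice.


Definition sinc (phi : nat -> nat) := forall p, (phi p < phi (S p))%nat.

Lemma sinc_ge : forall phi, sinc phi -> forall p, (p <= phi p)%nat.
Proof. intros phi H p; induction p. lia. specialize (H p); lia. Qed.

Lemma sinc_lt : forall phi, sinc phi -> forall p q, (p < q)%nat -> (phi p < phi q)%nat.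
Proof.
  intros phi H p q Hpq. induction q. lia.
  destruct (Nat.eq_dec p q). subst; apply H. specialize (H q). assert (p < q)%nat by lia. specialize (IHq H0). lia.
Qed.

Lemma sinc_comp : forall f g, sinc f -> sinc g -> sinc (fun p => f (g p)).
Proof. intros f g Hf Hg p. apply sinc_lt; auto. Qed.

Lemma cv_sub : forall u l phi, sinc phi -> Un_cv u l -> Un_cv (fun p => u (phi p)) l.
Proof.
  intros u l phi Hp Hu eps He. destruct (Hu eps He) as [N HN]. exists N.
  intros n Hn. apply HN. pose proof (sinc_ge phi Hp n); lia.
Qed.

Lemma inv_small : forall e, e > 0 -> exists N, forall n, (N <= n)%nat -> / INR (S n) < e.
Proof.
  intros e He. destruct (archimed (/ e)) as [H1 _].
  exists (Z.to_nat (up (/ e))). intros n Hn.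
  assert (INR (S n) > / e).
  { rewrite S_INR. assert (IZR (up (/ e)) <= INR n).
    { destruct (Z_le_gt_dec 0 (up (/e))).
      rewrite <- (Z2Nat.id (up (/e))) by auto. rewrite <- INR_IZR_INZ. apply le_INR; auto.
      apply Rle_trans with 0. apply IZR_le; lia. apply pos_INR. }
    lra. }
  assert (0 < / e) by (apply Rinv_0_lt_compat; lra).
  rewrite <- (Rinv_inv e). apply Rinv_lt_contravar; auto. nra.
Qed.

Lemma bw_sub : forall (y : nat -> R) B, (forall p, Rabs (y p) <= B) ->
  exists phi, sinc phi /\ exists l, Un_cv (fun p => y (phi p)) l.
Proof.
  intros y B HB.
  destruct (Bolzano_Weierstrass y (fun c => -B <= c <= B) (compact_P3 (-B) B)) as [l Hl].
  { intro n. specialize (HB n). pose proof (Rle_abs (y n)); pose proof (Rle_abs (- y n)); rewrite Rabs_Ropp in *; split; lra. }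
  assert (Hex : forall N k, exists p, (N <= p)%nat /\ Rabs (y p - l) < / INR (S k)).
  { intros N k. assert (Hpos : 0 < / INR (S k)) by (apply Rinv_0_lt_compat, lt_0_INR; lia).
    destruct (Hl (disc l (mkposreal _ Hpos)) N) as [p [Hp Hd]].
    exists (mkposreal _ Hpos). intros z Hz; auto.
    exists p; split; auto. }
  set (pick := fun N k => epsilon (inhabits 0%nat) (fun p => (N <= p)%nat /\ Rabs (y p - l) < / INR (S k))).
  assert (Hpick : forall N k, (N <= pick N k)%nat /\ Rabs (y (pick N k) - l) < / INR (S k)).
  { intros. apply (epsilon_spec (inhabits 0%nat) (fun p => (N <= p)%nat /\ Rabs (y p - l) < / INR (S k))). apply Hex. }
  set (phi := fix phi k := match k with O => pick O O | S k' => pick (S (phi k')) (S k') end).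
  exists phi. split.
  - intro p. simpl. destruct (Hpick (S (phi p)) (S p)). lia.
  - exists l. intros eps He. destruct (inv_small eps He) as [N HN]. exists N. intros n Hn.
    unfold R_dist. eapply Rlt_trans; [|apply (HN n Hn)].
    destruct n; simpl; apply Hpick.
Qed.

Definition sub_of (y : nat -> R) : nat -> nat :=
  epsilon (inhabits (fun p => p)) (fun phi => sinc phi /\ exists l, Un_cv (fun p => y (phi p)) l).

Lemma sub_of_spec : forall y B, (forall p, Rabs (y p) <= B) ->
  sinc (sub_of y) /\ exists l, Un_cv (fun p => y (sub_of y p)) l.
Proof.
  intros y B HB. unfold sub_of.
  apply (epsilon_spec (inhabits (fun p => p)) (fun phi => sinc phi /\ exists l, Un_cv (fun p => y (phi p)) l)).
  apply (bw_sub y B HB).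
Qed.

Lemma diag : forall (x : nat -> nat -> R) (B : nat -> R), (forall p c, Rabs (x p c) <= B c) ->
  exists phi, sinc phi /\ forall c, exists l, Un_cv (fun p => x (phi p) c) l.
Proof.
  intros x B HB.
  set (Phi := fix Phi c := match c with O => (fun p : nat => p)
            | S c' => fun p => Phi c' (sub_of (fun q => x (Phi c' q) c') p) end).
  assert (H1 : forall c, sinc (Phi c) /\ (forall p, Rabs (x (Phi c p) c) <= B c)).
  { induction c. 
    - split. intro p; simpl; lia. intro; apply HB.
    - split. 2:{ intro; apply HB. }
      simpl. apply sinc_comp. apply IHc. apply (sub_of_spec _ (B c)). intro; apply HB. }
  assert (H2 : forall c, exists l, Un_cv (fun p => x (Phi (S c) p) c) l).
  { intro c. simpl. apply (sub_of_spec (fun q => x (Phi c q) c) (B c)). intro; apply HB. }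
  assert (H3 : forall c d p, exists q, (p <= q)%nat /\ Phi (d + c)%nat p = Phi c q).
  { intros c d. induction d; intro p.
    - exists p; split; auto.
    - simpl. destruct (IHd (sub_of (fun q => x (Phi (d + c)%nat q) (d + c)%nat) p)) as [q [Hq E]].
      exists q. split. 
      + pose proof (sinc_ge _ (proj1 (sub_of_spec (fun q => x (Phi (d + c)%nat q) (d + c)%nat) (B (d+c)%nat) ltac:(intro; apply HB))) p). lia.
      + auto. }
  exists (fun p => Phi p p). split.
  - intro p. simpl.
    pose proof (sub_of_spec (fun q => x (Phi p q) p) (B p) ltac:(intro; apply HB)) as [Hs _].
    pose proof (sinc_ge _ Hs (S p)).
    destruct (H1 p) as [Hp _].
    destruct (Nat.eq_dec (sub_of (fun q => x (Phi p q) p) (S p)) (S p)) as [E|E].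
    + rewrite E. apply Hp.
    + apply sinc_lt; [auto|lia].
  - intro c. destruct (H2 c) as [l Hl]. exists l.
    intros eps He. destruct (Hl eps He) as [N HN]. exists (Nat.max N (S c)). intros n Hn.
    destruct (H3 (S c) (n - S c)%nat n) as [q [Hq E]].
    replace (n - S c + S c)%nat with n in E by lia. rewrite E. apply HN. lia.
Qed.

Definition Ccv (u : nat -> C) (l : C) : Prop :=
  forall eps, eps > 0 -> exists N, forall n, (N <= n)%nat -> Cmod (Csub (u n) l) < eps.

Lemma Ccv_of_parts : forall u l, Un_cv (fun n => Re (u n)) (Re l) -> Un_cv (fun n => Im (u n)) (Im l) -> Ccv u l.
Proof.
  intros u l H1 H2 eps He. destruct (H1 (eps/2)) as [N1 HN1]. lra. destruct (H2 (eps/2)) as [N2 HN2]. lra.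
  exists (Nat.max N1 N2). intros n Hn. eapply Rle_lt_trans. apply Cmod_le_sum.
  specialize (HN1 n ltac:(lia)). specialize (HN2 n ltac:(lia)). unfold R_dist in *. simpl. lra.
Qed.

Lemma diagC : forall (z : nat -> nat -> C) (B : nat -> R), (forall p c, Cmod (z p c) <= B c) ->
  exists phi, sinc phi /\ forall c, exists l, Ccv (fun p => z (phi p) c) l.
Proof.
  intros z B HB.
  destruct (diag (fun p c => Re (z p c)) B) as [phi1 [Hp1 H1]].
  { intros; eapply Rle_trans. apply Re_le. apply HB. }
  destruct (diag (fun p c => Im (z (phi1 p) c)) B) as [phi2 [Hp2 H2]].
  { intros; eapply Rle_trans. apply Im_le. apply HB. }
  exists (fun p => phi1 (phi2 p)). split. apply sinc_comp; auto.
  intro c. destruct (H1 c) as [l1 Hl1]. destruct (H2 c) as [l2 Hl2].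
  exists (mkC l1 l2). apply Ccv_of_parts; simpl; auto.
  apply (cv_sub (fun p => Re (z (phi1 p) c))); auto.
Qed.


Lemma Ccv_unique : forall u l1 l2, Ccv u l1 -> Ccv u l2 -> l1 = l2.
Proof.
  intros u l1 l2 H1 H2. apply NNPP; intro Hne.
  set (d := Cmod (Csub l1 l2)).
  assert (Hp : 0 < d).
  { destruct (Cmod_ge0 (Csub l1 l2)); auto. exfalso; apply Hne. symmetry in H.
    apply Cmod_eq0 in H. apply Ceq; [assert (Re (Csub l1 l2) = Re C0) by (rewrite H; auto)|
      assert (Im (Csub l1 l2) = Im C0) by (rewrite H; auto)]; simpl in *; lra. }
  destruct (H1 (d/2)) as [N1 HN1]. lra. destruct (H2 (d/2)) as [N2 HN2]. lra.
  specialize (HN1 (Nat.max N1 N2) ltac:(lia)). specialize (HN2 (Nat.max N1 N2) ltac:(lia)).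
  pose proof (Cmod_sub_tri l1 (u (Nat.max N1 N2)) l2).
  rewrite (Cmod_Csub_sym l1 (u (Nat.max N1 N2))) in H. fold d in H. lra.
Qed.

Lemma Ccv_const : forall c, Ccv (fun _ => c) c.
Proof.
  intros c eps He. exists O. intros. replace (Csub c c) with C0 by (apply Ceq; simpl; ring).
  rewrite Cmod_C0; lra.
Qed.

Lemma Ccv_add : forall u v a b, Ccv u a -> Ccv v b -> Ccv (fun n => Cadd (u n) (v n)) (Cadd a b).
Proof.
  intros u v a b Hu Hv eps He. destruct (Hu (eps/2)) as [N1 H1]. lra. destruct (Hv (eps/2)) as [N2 H2]. lra.
  exists (Nat.max N1 N2). intros n Hn. eapply Rle_lt_trans. apply Cmod_add_diff.
  specialize (H1 n ltac:(lia)). specialize (H2 n ltac:(lia)). lra.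
Qed.

Lemma Ccv_bounded : forall u a, Ccv u a -> exists M, 0 <= M /\ forall n, Cmod (u n) <= M.
Proof.
  intros u a H. destruct (H 1) as [N HN]. lra.
  assert (forall K, exists M, 0 <= M /\ forall n, (n <= K)%nat -> Cmod (u n) <= M).
  { induction K. exists (Cmod (u O)); split. apply Cmod_ge0. intros n Hn. replace n with O by lia. lra.
    destruct IHK as [M [HM0 HM]]. exists (Rmax M (Cmod (u (S K)))). split.
    eapply Rle_trans; [|apply Rmax_l]; auto.
    intros n Hn. destruct (Nat.eq_dec n (S K)). subst; apply Rmax_r.
    eapply Rle_trans; [|apply Rmax_l]. apply HM; lia. }
  destruct (H0 N) as [M [HM0 HM]]. exists (Rmax M (Cmod a + 1)). split.
  eapply Rle_trans; [|apply Rmax_l]; auto.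
  intro n. destruct (le_lt_dec n N). eapply Rle_trans; [|apply Rmax_l]. apply HM; auto.
  eapply Rle_trans; [|apply Rmax_r]. specialize (HN n ltac:(lia)).
  pose proof (Cmod_sub_tri (u n) a C0).
  replace (Csub (u n) C0) with (u n) in H1 by (apply Ceq; simpl; ring).
  replace (Csub a C0) with a in H1 by (apply Ceq; simpl; ring). lra.
Qed.

Lemma Ccv_mul : forall u v a b, Ccv u a -> Ccv v b -> Ccv (fun n => Cmul (u n) (v n)) (Cmul a b).
Proof.
  intros u v a b Hu Hv.
  destruct (Ccv_bounded u a Hu) as [M [HM0 HM]].
  intros eps He.
  set (e1 := eps / (M + Cmod b + 1)).
  assert (Hb0 := Cmod_ge0 b).
  assert (He1 : 0 < e1) by (apply Rdiv_lt_0_compat; lra).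
  assert (He1' : (M + Cmod b) * e1 < eps).
  { assert (e1 * (M + Cmod b + 1) = eps) by (unfold e1; field; lra). nra. }
  destruct (Hu e1 He1) as [N1 H1]. destruct (Hv e1 He1) as [N2 H2].
  exists (Nat.max N1 N2). intros n Hn. eapply Rle_lt_trans. apply Cmod_mul_diff.
  specialize (H1 n ltac:(lia)). specialize (H2 n ltac:(lia)). specialize (HM n).
  pose proof (Cmod_ge0 (Csub (v n) b)). pose proof (Cmod_ge0 (Csub (u n) a)).
  apply Rle_lt_trans with (M * e1 + Cmod b * e1); [|lra].
  apply Rplus_le_compat; apply Rmult_le_compat; try lra; apply Cmod_ge0.
Qed.

Lemma Ccauchy : forall u, (forall eps, eps > 0 -> exists N, forall n m, (N <= n)%nat -> (N <= m)%nat ->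
   Cmod (Csub (u n) (u m)) < eps) -> exists l, Ccv u l.
Proof.
  intros u H.
  assert (Hr : Cauchy_crit (fun n => Re (u n))).
  { intros eps He. destruct (H eps He) as [N HN]. exists N. intros n m Hn Hm. unfold R_dist.
    eapply Rle_lt_trans; [|apply (HN n m Hn Hm)]. apply (Re_le (Csub (u n) (u m))). }
  assert (Hi : Cauchy_crit (fun n => Im (u n))).
  { intros eps He. destruct (H eps He) as [N HN]. exists N. intros n m Hn Hm. unfold R_dist.
    eapply Rle_lt_trans; [|apply (HN n m Hn Hm)]. apply (Im_le (Csub (u n) (u m))). }
  destruct (R_complete _ Hr) as [a Ha]. destruct (R_complete _ Hi) as [b Hb].
  exists (mkC a b). apply Ccv_of_parts; auto.
Qed.

Lemma finite_eventually : forall {X : Type} (l : list X) (P : X -> nat -> Prop),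
  (forall x, In x l -> exists N, forall p, (N <= p)%nat -> P x p) ->
  exists N, forall p, (N <= p)%nat -> forall x, In x l -> P x p.
Proof.
  intros X l P. induction l as [|a l IH]; intros H.
  - exists O; intros p _ x [].
  - destruct (H a (or_introl eq_refl)) as [N1 H1].
    destruct IH as [N2 H2]. intros; apply H; right; auto.
    exists (Nat.max N1 N2). intros p Hp x [<-|Hx]. apply H1; lia. apply H2; auto; lia.
Qed.


Section Leb.
Variable F : nat -> arith.
Hypothesis HF : forall i, linf_bounded (F i).
Let A := gen_anqie F.
Let HA : is_anqie A := gen_anqie_anqie F HF.

Lemma limit_char : forall (r : nat -> arith -> C) (phi : nat -> nat),
  (forall p, is_char A (r p)) ->
  (forall i j, exists l, Ccv (fun p => r (phi p) (shiftn j (F i))) l) ->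
  exists rs, is_char A rs /\ forall f, A f -> Ccv (fun p => r (phi p) f) (rs f).
Proof.
  intros r phi Hr Hco.
  assert (Hconv : forall f, A f -> exists l, Ccv (fun p => r (phi p) f) l).
  { intros f Hf. apply Ccauchy. intros eps He.
    destruct (all_nice F HF f Hf eps He) as [K [s [Hs Hn]]].
    set (L := list_prod (seq 0 (S K)) (seq 0 (S K))).
    destruct (finite_eventually L (fun x p => forall q, (p <= q)%nat ->
       Cmod (Csub (r (phi p) (shiftn (snd x) (F (fst x)))) (r (phi q) (shiftn (snd x) (F (fst x))))) < s)) as [N HN].
    { intros [i j] _. destruct (Hco i j) as [l Hl]. destruct (Hl (s/2)) as [N HN]. lra.
      exists N. intros p Hp q Hq. simpl.
      pose proof (Cmod_sub_tri (r (phi p) (shiftn j (F i))) l (r (phi q) (shiftn j (F i)))).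
      rewrite (Cmod_Csub_sym l) in H. pose proof (HN p Hp). pose proof (HN q ltac:(lia)). lra. }
    exists N. intros n m Hn1 Hm1.
    assert (Hcl : forall a b, (N <= a)%nat -> (a <= b)%nat -> close F (r (phi a)) (r (phi b)) K s).
    { intros a b Ha Hab i j Hi Hj. apply (HN a Ha (i, j)); auto.
      unfold L. apply in_prod; apply in_seq; lia. }
    destruct (le_lt_dec n m).
    - apply Hn; [apply Hr|apply Hr|apply Hcl; auto; lia].
    - rewrite Cmod_Csub_sym. apply Hn; [apply Hr|apply Hr|apply Hcl; auto; lia]. }
  set (rs := fun f => epsilon (inhabits C0) (fun l => Ccv (fun p => r (phi p) f) l)).
  assert (Hrs : forall f, A f -> Ccv (fun p => r (phi p) f) (rs f)).
  { intros f Hf. unfold rs. apply (epsilon_spec (inhabits C0) (fun l => Ccv (fun p => r (phi p) f) l)).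
    apply Hconv; auto. }
  exists rs. split; auto.
  split; [|split; [|split]].
  - apply (Ccv_unique (fun p => r (phi p) (fun _ => C1))). apply Hrs, (anq_one A HA).
    replace (fun p => r (phi p) (fun _ => C1)) with (fun _ : nat => C1). apply Ccv_const.
    apply functional_extensionality; intro p. symmetry; apply (ch_one A HA (r (phi p)) (Hr _)).
  - intros f g Hf Hg. apply (Ccv_unique (fun p => r (phi p) (fun n => Cadd (f n) (g n)))).
    apply Hrs, (anq_add A HA); auto.
    replace (fun p => r (phi p) (fun n => Cadd (f n) (g n))) with (fun p => Cadd (r (phi p) f) (r (phi p) g)).
    apply Ccv_add; auto.
    apply functional_extensionality; intro p. symmetry; apply (ch_add A HA (r (phi p)) (Hr _)); auto.
  - intros c f Hf. apply (Ccv_unique (fun p => r (phi p) (fun n => Cmul c (f n)))).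
    apply Hrs, (anq_scal A HA); auto.
    replace (fun p => r (phi p) (fun n => Cmul c (f n))) with (fun p => Cmul ((fun _ => c) p) (r (phi p) f)).
    apply Ccv_mul; auto. apply Ccv_const.
    apply functional_extensionality; intro p. symmetry; apply (ch_scal A HA (r (phi p)) (Hr _)); auto.
  - intros f g Hf Hg. apply (Ccv_unique (fun p => r (phi p) (fun n => Cmul (f n) (g n)))).
    apply Hrs, (anq_mul A HA); auto.
    replace (fun p => r (phi p) (fun n => Cmul (f n) (g n))) with (fun p => Cmul (r (phi p) f) (r (phi p) g)).
    apply Ccv_mul; auto.
    apply functional_extensionality; intro p. symmetry; apply (ch_mul A HA (r (phi p)) (Hr _)); auto.
Qed.

Lemma lebesgue : forall Vs, open_cover A Vs ->
  exists K s, s > 0 /\ forall rho, is_char A rho -> exists idx, forall rho', is_char A rho' ->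
    close F rho rho' K s -> nth idx Vs (fun _ => False) rho'.
Proof.
  intros Vs [Hop Hcov]. apply NNPP; intro Hn.
  assert (Hbad : forall p, exists rho, is_char A rho /\ forall idx, exists rho', is_char A rho' /\
      close F rho rho' p (/ INR (S p)) /\ ~ nth idx Vs (fun _ => False) rho').
  { intro p. apply NNPP; intro H1. apply Hn. exists p, (/ INR (S p)). split.
    apply Rinv_0_lt_compat, lt_0_INR; lia.
    intros rho Hr. apply NNPP; intro H2. apply H1. exists rho. split; auto. intro idx.
    apply NNPP; intro H3. apply H2. exists idx. intros rho' Hr' Hc. apply NNPP; intro H4.
    apply H3. exists rho'. auto. }
  set (Pb := fun p rho => is_char A rho /\ forall idx, exists rho', is_char A rho' /\
      close F rho rho' p (/ INR (S p)) /\ ~ nth idx Vs (fun _ => False) rho').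
  set (r := fun p => epsilon (inhabits (ev 0)) (Pb p)).
  assert (Hr : forall p, Pb p (r p)) by (intro p; apply epsilon_spec; apply Hbad).
  set (M := fun i => epsilon (inhabits 0) (fun M => forall n, Cmod (F i n) <= M)).
  assert (HM : forall i n, Cmod (F i n) <= M i).
  { intro i. apply (epsilon_spec (inhabits 0) (fun M => forall n, Cmod (F i n) <= M)). apply HF. }
  set (z := fun p c => r p (shiftn (snd (of_nat c)) (F (fst (of_nat c))))).
  destruct (diagC z (fun c => M (fst (of_nat c)))) as [phi [Hphi Hz]].
  { intros p c. unfold z. apply (char_bound A); auto. apply Hr.
    apply (anq_shiftn A HA). apply gen_contains. intro n. rewrite shiftn_app. apply HM. }
  destruct (limit_char r phi) as [rs [Hrs Hcv]].
  { intro p; apply Hr. }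
  { intros i j. destruct (Hz (to_nat (i, j))) as [l Hl]. exists l. unfold z in Hl.
    rewrite cancel_of_to in Hl. exact Hl. }
  destruct (Hcov rs Hrs) as [U [HU HUr]].
  destruct (In_nth Vs U (fun _ => False) HU) as [idx [_ Hidx]].
  destruct (Hop U HU rs Hrs HUr) as [l [eps0 [He0 [HlA Hl]]]].
  destruct (finite_eventually l (fun f p => forall rho', is_char A rho' ->
      close F (r (phi p)) rho' (phi p) (/ INR (S (phi p))) -> Cmod (Csub (rho' f) (rs f)) < eps0)) as [N HN].
  { intros f Hf. destruct (all_nice F HF f (HlA f Hf) (eps0/2)) as [K [s [Hs Hnice]]]. lra.
    destruct (inv_small s Hs) as [N1 HN1].
    destruct (Hcv f (HlA f Hf) (eps0/2)) as [N2 HN2]. lra.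
    exists (Nat.max K (Nat.max N1 N2)). intros p Hp rho' Hr' Hc.
    pose proof (sinc_ge phi Hphi p).
    assert (Hc' : close F (r (phi p)) rho' K s).
    { eapply close_mono; eauto. lia. left. apply HN1. lia. }
    specialize (Hnice (r (phi p)) rho' (proj1 (Hr _)) Hr' Hc').
    specialize (HN2 p ltac:(lia)).
    pose proof (Cmod_sub_tri (rho' f) (r (phi p) f) (rs f)).
    rewrite (Cmod_Csub_sym (rho' f) (r (phi p) f)) in H0. lra. }
  destruct (proj2 (Hr (phi N)) idx) as [rho' [Hr' [Hc Hnot]]].
  apply Hnot. rewrite Hidx. apply Hl; auto. intros f Hf. apply (HN N (le_n N) f Hf rho' Hr' Hc).
Qed.

End Leb.


Lemma subadd_mult : forall a : nat -> R, (forall m n, a (m + n)%nat <= a m + a n) ->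
  forall M q r, a (q * M + r)%nat <= INR q * a M + a r.
Proof.
  intros a H M q r. induction q.
  - simpl. lra.
  - replace (S q * M + r)%nat with (M + (q * M + r))%nat by lia.
    eapply Rle_trans. apply H. rewrite S_INR. lra.
Qed.

Lemma fekete : forall a : nat -> R, (forall n, 0 <= a n) -> (forall m n, a (m + n)%nat <= a m + a n) ->
  exists h, Un_cv (fun n => a (S n) / INR (S n)) h.
Proof.
  intros a Ha Hs.
  set (E := fun x => exists n, x = - (a (S n) / INR (S n))).
  destruct (completeness E) as [m [Hub Hlub]].
  { exists 0. intros x [n ->]. assert (0 <= a (S n) / INR (S n)).
    unfold Rdiv; apply Rmult_le_pos; auto. left; apply Rinv_0_lt_compat, lt_0_INR; lia. lra. }
  { exists (- (a 1%nat / INR 1)). exists O; auto. }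
  set (h := - m).
  assert (Hlow : forall n, h <= a (S n) / INR (S n)).
  { intro n. assert (- (a (S n) / INR (S n)) <= m) by (apply Hub; exists n; auto). unfold h; lra. }
  assert (Happ : forall e, e > 0 -> exists n, a (S n) / INR (S n) < h + e).
  { intros e He. apply NNPP; intro Hn. assert (is_upper_bound E (m - e)).
    { intros x [n ->]. apply Rnot_lt_le. intro Hc. apply Hn. exists n. unfold h; lra. }
    specialize (Hlub _ H). lra. }
  exists h. intros eps He.
  destruct (Happ (eps / 2)) as [m0 Hm0]. lra.
  set (M := S m0).
  set (C := fold_right Rplus 0 (map a (seq 0 M))).
  assert (HC : forall r, (r < M)%nat -> a r <= C).
  { assert (forall l r, (forall x, 0 <= a x) -> In r l -> a r <= fold_right Rplus 0 (map a l)).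
    { induction l; simpl; intros r Hp Hin; [contradiction|destruct Hin as [<-|Hr]].
      - assert (0 <= fold_right Rplus 0 (map a l)).
        { clear IHl. induction l; simpl. lra. pose proof (Hp a1); lra. }
        lra.
      - specialize (IHl r Hp Hr). pose proof (Hp a0). lra. }
    intros r Hr. apply H; auto. apply in_seq; lia. }
  assert (HC0 : 0 <= C) by (pose proof (HC O ltac:(unfold M; lia)); pose proof (Ha O); lra).
  destruct (inv_small (eps / 2 / (C + 1))) as [N HN].
  { apply Rdiv_lt_0_compat; lra. }
  exists N. intros n Hn. unfold R_dist.
  specialize (Hlow n).
  set (k := S n).
  assert (Hk : (k = M * (k / M) + k mod M)%nat) by (apply Nat.div_mod; unfold M; lia).
  assert (Hr : (k mod M < M)%nat) by (apply Nat.mod_upper_bound; unfold M; lia).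
  set (q := (k / M)%nat) in *. set (r := (k mod M)%nat) in *.
  assert (Hak : a k <= INR q * a M + C).
  { rewrite Hk. replace (M * q + r)%nat with (q * M + r)%nat by lia.
    eapply Rle_trans. apply subadd_mult; auto. specialize (HC r Hr). lra. }
  assert (HkR : 0 < INR k) by (apply lt_0_INR; unfold k; lia).
  assert (HMR : 0 < INR M) by (apply lt_0_INR; unfold M; lia).
  assert (HqM : INR q * INR M <= INR k).
  { rewrite <- mult_INR. apply le_INR. lia. }
  assert (HaM := Ha M).
  assert (T1 : INR q * a M / INR k <= a M / INR M).
  { apply Rmult_le_reg_r with (INR k * INR M). nra.
    unfold Rdiv. replace (INR q * a M * / INR k * (INR k * INR M)) with (INR q * INR M * a M) by (field; lra).
    replace (a M * / INR M * (INR k * INR M)) with (INR k * a M) by (field; lra). nra. }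
  assert (T2 : C / INR k < eps / 2).
  { specialize (HN n Hn). fold k in HN.
    apply Rle_lt_trans with ((C + 1) * / INR k). unfold Rdiv. apply Rmult_le_compat_r.
    left; apply Rinv_0_lt_compat; lra. lra.
    apply Rmult_lt_reg_l with (/ (C + 1)). apply Rinv_0_lt_compat; lra.
    rewrite <- Rmult_assoc, Rinv_l, Rmult_1_l by lra. 
    replace (/ (C + 1) * (eps / 2)) with (eps / 2 / (C + 1)) by (field; lra). auto. }
  assert (a k / INR k <= INR q * a M / INR k + C / INR k).
  { unfold Rdiv. rewrite <- Rmult_plus_distr_r. apply Rmult_le_compat_r; auto.
    left; apply Rinv_0_lt_compat; lra. }
  fold k in Hlow. unfold M in *. rewrite Rabs_right; lra.
Qed.


Lemma nth_map_seq : forall (f : nat -> nat) j n, (j < n)%nat -> nth j (map f (seq 0 n)) 0%nat = f j.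
Proof.
  intros. rewrite (nth_indep _ _ (f 0%nat)) by (rewrite length_map, length_seq; auto).
  rewrite map_nth. rewrite seq_nth; auto.
Qed.

Fixpoint words (L n : nat) : list (list nat) :=
  match n with O => nil :: nil | S n' => flat_map (fun a => map (cons a) (words L n')) (seq 0 L) end.

Lemma in_words : forall L n w, length w = n -> (forall a, In a w -> (a < L)%nat) -> In w (words L n).
Proof.
  intros L n. induction n; intros w Hl Ha.
  - destruct w; simpl in *; try lia. auto.
  - destruct w as [|a w]; simpl in Hl; try lia. simpl.
    apply in_flat_map. exists a. split. apply in_seq. specialize (Ha a (or_introl eq_refl)). lia.
    apply in_map. apply IHn; auto. intros; apply Ha; right; auto.
Qed.

Section Cov.
Variable B : arith -> Prop.
Hypothesis HB : is_anqie B.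
Variable Us : list ((arith -> C) -> Prop).
Hypothesis HU : open_cover B Us.

Lemma covers_exists : forall n, covers_with B Us n (length (words (length Us) n)).
Proof.
  intro n. exists (words (length Us) n). split; auto.
  intros rho Hr.
  set (idx := fun j => epsilon (inhabits 0%nat) (fun i => (i < length Us)%nat /\ nth i Us (fun _ => False) (Amap_iter j rho))).
  assert (Hidx : forall j, (idx j < length Us)%nat /\ nth (idx j) Us (fun _ => False) (Amap_iter j rho)).
  { intro j. apply (epsilon_spec (inhabits 0%nat) (fun i => (i < length Us)%nat /\ nth i Us (fun _ => False) (Amap_iter j rho))).
    destruct HU as [_ Hc]. destruct (Hc (Amap_iter j rho) (char_Amap B j rho HB Hr)) as [U [HUi HUr]].
    destruct (In_nth Us U (fun _ => False) HUi) as [i [Hi E]]. exists i. rewrite E; auto. }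
  exists (map idx (seq 0 n)). split.
  - apply in_words. rewrite length_map, length_seq; auto.
    intros a Ha. apply in_map_iff in Ha. destruct Ha as [j [<- _]]. apply Hidx.
  - intros j Hj. unfold word_set. rewrite nth_map_seq; auto. apply Hidx.
Qed.

Definition pad (m : nat) (w : list nat) := map (fun j => nth j w 0%nat) (seq 0 m).

Lemma covers_mult : forall m n k1 k2, covers_with B Us m k1 -> covers_with B Us n k2 ->
  covers_with B Us (m + n) (k1 * k2).
Proof.
  intros m n k1 k2 [ws1 [L1 H1]] [ws2 [L2 H2]].
  exists (flat_map (fun w1 => map (fun w2 => pad m w1 ++ w2) ws2) ws1). split.
  - subst. clear H1. induction ws1; simpl; auto. rewrite length_app, length_map, IHws1. lia.
  - intros rho Hr. destruct (H1 rho Hr) as [w1 [Hw1 Ws1]].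
    destruct (H2 (Amap_iter m rho) (char_Amap B m rho HB Hr)) as [w2 [Hw2 Ws2]].
    exists (pad m w1 ++ w2). split.
    + apply in_flat_map. exists w1; split; auto. apply in_map; auto.
    + intros j Hj. assert (Hpl : length (pad m w1) = m) by (unfold pad; rewrite length_map, length_seq; auto).
      destruct (le_lt_dec m j).
      * rewrite app_nth2 by lia. rewrite Hpl.
        replace (Amap_iter j rho) with (Amap_iter (j - m) (Amap_iter m rho)).
        apply Ws2; lia. rewrite Amap_Amap. f_equal; lia.
      * rewrite app_nth1 by lia. unfold pad. rewrite nth_map_seq; auto.
Qed.

Lemma covers_pos : forall n k, covers_with B Us n k -> (1 <= k)%nat.
Proof.
  intros n k [ws [L H]]. destruct (H (ev 0) (ev_char B 0)) as [w [Hw _]].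
  destruct ws; simpl in *; [contradiction|lia].
Qed.

Lemma covnum_exists : forall n, exists N, is_covnum B Us n N.
Proof.
  intro n. destruct (dec_inh_nat_subset_has_unique_least_element (covers_with B Us n)) as [N [[HN Hmin] _]].
  intro k; apply classic. exists (length (words (length Us) n)); apply covers_exists.
  exists N. split; auto.
Qed.

Lemma ln_le : forall x y, 0 < x -> x <= y -> ln x <= ln y.
Proof. intros. destruct H0. left; apply ln_increasing; auto. subst; lra. Qed.

Lemma cover_entropy_exists : exists h, cover_entropy B Us h.
Proof.
  set (Nc := fun n => epsilon (inhabits 0%nat) (fun N => is_covnum B Us n N)).
  assert (HN : forall n, is_covnum B Us n (Nc n)).
  { intro n. apply (epsilon_spec (inhabits 0%nat) (fun N => is_covnum B Us n N)). apply covnum_exists. }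
  assert (Hpos : forall n, 1 <= INR (Nc n)).
  { intro n. replace 1 with (INR 1) by auto. apply le_INR. apply (covers_pos n). apply HN. }
  destruct (fekete (fun n => ln (INR (Nc n)))) as [h Hh].
  - intro n. rewrite <- ln_1. apply ln_le; auto. lra.
  - intros m n. rewrite <- ln_mult by (pose proof (Hpos m); pose proof (Hpos n); lra).
    apply ln_le. pose proof (Hpos (m + n)%nat); lra.
    rewrite <- mult_INR. apply le_INR. apply (HN (m + n)%nat). apply covers_mult; apply HN.
  - exists h, Nc. split; auto.
Qed.

End Cov.


Definition pred_ := (arith -> C) -> Prop.

Definition join (L1 L2 : list pred_) : list pred_ :=
  flat_map (fun U => map (fun W => fun rho => U rho /\ W rho) L2) L1.

Lemma in_join : forall L1 L2 V, In V (join L1 L2) -> exists U W, In U L1 /\ In W L2 /\ V = fun rho => U rho /\ W rho.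
Proof.
  intros. unfold join in H. apply in_flat_map in H. destruct H as [U [HU HV]].
  apply in_map_iff in HV. destruct HV as [W [<- HW]]. exists U, W; auto.
Qed.

Lemma join_in : forall L1 L2 U W, In U L1 -> In W L2 -> In (fun rho => U rho /\ W rho) (join L1 L2).
Proof. intros. unfold join. apply in_flat_map. exists U; split; auto. apply in_map with (f := fun W => fun rho => U rho /\ W rho); auto. Qed.

Definition zrange (Z0 : nat) : list Z := map (fun n => (Z.of_nat n - Z.of_nat Z0)%Z) (seq 0 (2 * Z0 + 1)).

Lemma in_zrange : forall Z0 z, (- Z.of_nat Z0 <= z <= Z.of_nat Z0)%Z -> In z (zrange Z0).
Proof.
  intros. unfold zrange. apply in_map_iff. exists (Z.to_nat (z + Z.of_nat Z0)). split.
  rewrite Z2Nat.id by lia. lia. apply in_seq. lia.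
Qed.

Definition cells1 (t : R) (Z0 : nat) (x : (arith -> C) -> R) : list pred_ :=
  map (fun z => fun rho => Rabs (x rho - IZR z * t) < t) (zrange Z0).

Definition grid (t : R) (Z0 : nat) (cs : list ((arith -> C) -> R)) : list pred_ :=
  fold_right (fun x acc => join (cells1 t Z0 x) acc) ((fun _ => True) :: nil) cs.

Section Grid.
Variable B : arith -> Prop.
Hypothesis HB : is_anqie B.
Variable t M : R.
Hypothesis Ht : t > 0.
Hypothesis HM : 0 <= M.
Let Z0 := Z.to_nat (up (M / t)).

Lemma round_exists : forall y, Rabs y <= M -> exists z, In z (zrange Z0) /\ Rabs (y - IZR z * t) < t.
Proof.
  intros y Hy. destruct (archimed (y / t)) as [A1 A2]. destruct (archimed (M / t)) as [B1 B2].
  set (z := (up (y / t) - 1)%Z). exists z. 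
  assert (Hyt : - (M / t) <= y / t <= M / t).
  { pose proof (Rle_abs y). pose proof (Rle_abs (- y)). rewrite Rabs_Ropp in H0.
    assert (0 < / t) by (apply Rinv_0_lt_compat; auto). unfold Rdiv; split; nra. }
  assert (HMt : 0 <= M / t) by (unfold Rdiv; apply Rmult_le_pos; auto; left; apply Rinv_0_lt_compat; auto).
  assert (Hz : IZR z = IZR (up (y / t)) - 1) by (unfold z; rewrite minus_IZR; auto).
  split.
  - apply in_zrange. unfold Z0. rewrite Z2Nat.id.
    2:{ apply le_IZR. lra. }
    split.
    + assert (IZR (up (y / t)) - 1 > - IZR (up (M / t)) - 1) by lra.
      assert (IZR z > IZR (- up (M / t) - 1)) by (rewrite minus_IZR, opp_IZR; lra).
      apply lt_IZR in H0. lia.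
    + assert (IZR z < IZR (up (M / t))) by lra. apply lt_IZR in H. lia.
  - rewrite Hz. assert (E : y - (IZR (up (y / t)) - 1) * t = t * (y / t - IZR (up (y / t)) + 1)) by (field; lra).
    rewrite E. rewrite Rabs_mult, Rabs_right by lra. rewrite Rabs_right by lra.
    assert (t * (y / t - IZR (up (y / t)) + 1) < t * 1) by (apply Rmult_lt_compat_l; lra). lra.
Qed.

Definition goodc (x : (arith -> C) -> R) :=
  (exists f, B f /\ forall rho rho', Rabs (x rho' - x rho) <= Cmod (Csub (rho' f) (rho f))) /\
  (forall rho, is_char B rho -> Rabs (x rho) <= M).

Lemma wopen_and : forall U W, wopen B U -> wopen B W -> wopen B (fun rho => U rho /\ W rho).
Proof.
  intros U W HU HW rho Hr [Ur Wr].
  destruct (HU rho Hr Ur) as [l1 [e1 [He1 [Hl1 H1]]]].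
  destruct (HW rho Hr Wr) as [l2 [e2 [He2 [Hl2 H2]]]].
  exists (l1 ++ l2), (Rmin e1 e2). split. apply Rmin_glb_lt; auto. split.
  intros f Hf. apply in_app_or in Hf; destruct Hf; auto.
  intros rho' Hr' Hc. split.
  - apply H1; auto. intros f Hf. eapply Rlt_le_trans. apply Hc. apply in_or_app; auto. apply Rmin_l.
  - apply H2; auto. intros f Hf. eapply Rlt_le_trans. apply Hc. apply in_or_app; auto. apply Rmin_r.
Qed.

Lemma wopen_true : wopen B (fun _ => True).
Proof. intros rho _ _. exists nil, 1. split. lra. split. intros f []. auto. Qed.

Lemma wopen_cell : forall x z, goodc x -> wopen B (fun rho => Rabs (x rho - IZR z * t) < t).
Proof.
  intros x z [[f [Hf Hx]] _] rho Hr Hin.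
  exists (f :: nil), (t - Rabs (x rho - IZR z * t)). split. lra. split.
  intros g [<-|[]]; auto.
  intros rho' Hr' Hc. specialize (Hc f (or_introl eq_refl)). specialize (Hx rho rho').
  pose proof (Rabs_triang (x rho' - x rho) (x rho - IZR z * t)).
  replace (x rho' - x rho + (x rho - IZR z * t)) with (x rho' - IZR z * t) in H by ring. lra.
Qed.

Lemma grid_open : forall cs, (forall x, In x cs -> goodc x) -> forall U, In U (grid t Z0 cs) -> wopen B U.
Proof.
  induction cs as [|x cs IH]; intros Hg U HU.
  - simpl in HU. destruct HU as [<-|[]]. apply wopen_true.
  - simpl in HU. apply in_join in HU. destruct HU as [U1 [W [H1 [H2 ->]]]].
    apply wopen_and. unfold cells1 in H1. apply in_map_iff in H1. destruct H1 as [z [<- _]].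
    apply wopen_cell. apply Hg; left; auto. apply IH; auto. intros; apply Hg; right; auto.
Qed.

Lemma grid_cov : forall cs, (forall x, In x cs -> goodc x) -> forall rho, is_char B rho ->
  exists U, In U (grid t Z0 cs) /\ U rho.
Proof.
  induction cs as [|x cs IH]; intros Hg rho Hr.
  - exists (fun _ => True). simpl; auto.
  - destruct (IH (fun y Hy => Hg y (or_intror Hy)) rho Hr) as [W [HW Wr]].
    destruct (round_exists (x rho)) as [z [Hz Hzr]]. apply (Hg x (or_introl eq_refl)); auto.
    exists (fun rho0 => (fun rho => Rabs (x rho - IZR z * t) < t) rho0 /\ W rho0). split; auto.
    simpl. apply join_in; auto. unfold cells1. apply in_map with (f := fun z => fun rho => Rabs (x rho - IZR z * t) < t). auto.
Qed.

Lemma grid_fine : forall cs U, In U (grid t Z0 cs) -> forall rho rho', U rho -> U rho' ->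
  forall x, In x cs -> Rabs (x rho - x rho') < 2 * t.
Proof.
  induction cs as [|y cs IH]; intros U HU rho rho' Ur Ur' x Hx.
  - destruct Hx.
  - simpl in HU. apply in_join in HU. destruct HU as [U1 [W [H1 [H2 ->]]]].
    destruct Ur as [U1r Wr]. destruct Ur' as [U1r' Wr'].
    destruct Hx as [->|Hx].
    + unfold cells1 in H1. apply in_map_iff in H1. destruct H1 as [z [<- _]].
      pose proof (Rabs_triang (x rho - IZR z * t) (IZR z * t - x rho')).
      rewrite <- Rabs_Ropp with (x := IZR z * t - x rho') in H.
      replace (x rho - IZR z * t + (IZR z * t - x rho')) with (x rho - x rho') in H by ring.
      replace (- (IZR z * t - x rho')) with (x rho' - IZR z * t) in H by ring. lra.
    + eapply IH; eauto.
Qed.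

End Grid.

Lemma grid_cover : forall G, (forall i, linf_bounded (G i)) -> forall K t, t > 0 ->
  exists Us, open_cover (gen_anqie G) Us /\ forall U, In U Us -> forall rho rho', U rho -> U rho' ->
    forall i, (i <= K)%nat -> Cmod (Csub (rho (G i)) (rho' (G i))) < 4 * t.
Proof.
  intros G HG K t Ht.
  set (B := gen_anqie G). assert (HB : is_anqie B) by (apply gen_anqie_anqie; auto).
  assert (HMex : exists M, 0 <= M /\ forall i n, (i <= K)%nat -> Cmod (G i n) <= M).
  { induction K.
    - destruct (HG 0%nat) as [M HM]. exists (Rmax M 0). split. apply Rmax_r.
      intros i n Hi. replace i with 0%nat by lia. eapply Rle_trans; [apply HM|apply Rmax_l].
    - destruct IHK as [M [HM0 HM]]. destruct (HG (S K)) as [M' HM']. exists (Rmax M M'). split.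
      eapply Rle_trans; [apply HM0|apply Rmax_l].
      intros i n Hi. destruct (Nat.eq_dec i (S K)). subst. eapply Rle_trans; [apply HM'|apply Rmax_r].
      eapply Rle_trans; [apply HM; lia|apply Rmax_l]. }
  destruct HMex as [M [HM0 HM]].
  set (cs := flat_map (fun i => (fun rho : arith -> C => Re (rho (G i))) :: (fun rho : arith -> C => Im (rho (G i))) :: nil) (seq 0 (S K))).
  assert (Hg : forall x, In x cs -> goodc B M x).
  { intros x Hx. unfold cs in Hx. apply in_flat_map in Hx. destruct Hx as [i [Hi Hx]].
    apply in_seq in Hi. assert (HGi : B (G i)) by apply gen_contains.
    assert (Hbd : forall rho, is_char B rho -> Cmod (rho (G i)) <= M).
    { intros rho Hr. apply (char_bound B rho (G i) M HB Hr HGi). intro n; apply HM; lia. }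
    destruct Hx as [<-|[<-|[]]]; split.
    - exists (G i); split; auto. intros rho rho'. apply (Re_le (Csub (rho' (G i)) (rho (G i)))).
    - intros rho Hr. eapply Rle_trans. apply Re_le. auto.
    - exists (G i); split; auto. intros rho rho'. apply (Im_le (Csub (rho' (G i)) (rho (G i)))).
    - intros rho Hr. eapply Rle_trans. apply Im_le. auto. }
  exists (grid t (Z.to_nat (up (M / t))) cs). split. split.
  - intros U HU. eapply grid_open; eauto.
  - intros rho Hr. eapply grid_cov; eauto.
  - intros U HU rho rho' Ur Ur' i Hi.
    assert (Hin1 : In (fun rho : arith -> C => Re (rho (G i))) cs).
    { unfold cs. apply in_flat_map. exists i. split. apply in_seq; lia. left; auto. }
    assert (Hin2 : In (fun rho : arith -> C => Im (rho (G i))) cs).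
    { unfold cs. apply in_flat_map. exists i. split. apply in_seq; lia. right; left; auto. }
    pose proof (grid_fine t _ cs U HU rho rho' Ur Ur' _ Hin1) as F1.
    pose proof (grid_fine t _ cs U HU rho rho' Ur Ur' _ Hin2) as F2.
    eapply Rle_lt_trans. apply Cmod_le_sum. simpl. lra.
Qed.


Lemma nth_in_or : forall (Us : list ((arith -> C) -> Prop)) idx rho,
  nth idx Us (fun _ => False) rho -> In (nth idx Us (fun _ => False)) Us.
Proof.
  intros. destruct (lt_dec idx (length Us)). apply nth_In; auto.
  rewrite nth_overflow in H by lia. contradiction.
Qed.

Lemma cv_shift : forall u l K, Un_cv u l -> Un_cv (fun n => u (n + K)%nat) l.
Proof.
  intros u l K H eps He. destruct (H eps He) as [N HN]. exists N. intros n Hn. apply HN; lia.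
Qed.

Lemma cv_ratio : forall K, Un_cv (fun n => INR (S (n + K)) / INR (S n)) 1.
Proof.
  intros K eps He. destruct (inv_small (eps / (INR K + 1))) as [N HN].
  { apply Rdiv_lt_0_compat; auto. pose proof (pos_INR K); lra. }
  exists N. intros n Hn. unfold R_dist.
  assert (HS : 0 < INR (S n)) by (apply lt_0_INR; lia).
  replace (INR (S (n + K)) / INR (S n) - 1) with (INR K * / INR (S n)).
  2:{ replace (INR (S (n + K))) with (INR (S n) + INR K) by (rewrite <- plus_INR; f_equal; lia). field. lra. }
  pose proof (pos_INR K). rewrite Rabs_right.
  2:{ apply Rle_ge, Rmult_le_pos; auto. left; apply Rinv_0_lt_compat; auto. }
  specialize (HN n Hn).
  apply Rle_lt_trans with ((INR K + 1) * / INR (S n)).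
  apply Rmult_le_compat_r. left; apply Rinv_0_lt_compat; auto. lra.
  apply Rmult_lt_reg_l with (/ (INR K + 1)). apply Rinv_0_lt_compat; lra.
  rewrite <- Rmult_assoc, Rinv_l, Rmult_1_l by lra.
  replace (/ (INR K + 1) * eps) with (eps / (INR K + 1)) by (field; lra). auto.
Qed.

Theorem theorem1p4 :
  forall (F : nat -> arith),
    (forall i, linf_bounded (F i)) ->
    forall a : R, is_AE (gen_anqie F) (ERfin a) ->
    forall eps : R, eps > 0 ->
    exists delta : R, delta > 0 /\
      forall G : nat -> arith,
        (forall i, linf_bounded (G i)) ->
        (exists c : R, c < delta /\ forall i n, Cmod (Csub (G i n) (F i n)) <= c) ->
        forall e : ER, is_AE (gen_anqie G) e ->
        ER_lt (ERfin (a - eps)) e.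
Proof.
  intros F HF a HAE eps Heps.
  set (A := gen_anqie F). assert (HA : is_anqie A) by (apply gen_anqie_anqie; auto).
  assert (HV : exists V hV, open_cover A V /\ cover_entropy A V hV /\ a - eps / 2 < hV).
  { apply NNPP; intro Hn. destruct HAE as [_ H2].
    specialize (H2 (a - eps / 2)). simpl in H2.
    assert (a <= a - eps / 2). 
    { apply H2. intros Us h Ho Hc. apply Rnot_lt_le. intro Hl. apply Hn. exists Us, h; auto. }
    lra. }
  destruct HV as [V [hV [HVo [HVe HVa]]]].
  destruct (lebesgue F HF V HVo) as [K [s [Hs Hleb]]].
  exists (s / 4). split. lra.
  intros G HG [c [Hc Hcd]] e HeAE.
  destruct e as [e'|]; simpl; auto.
  set (B := gen_anqie G). assert (HB : is_anqie B) by (apply gen_anqie_anqie; auto).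
  destruct (grid_cover G HG K (s / 16)) as [Us [HUo Hfine]]. lra.
  destruct (cover_entropy_exists B HB Us HUo) as [hG HhG].
  assert (HhGe : hG <= e') by (destruct HeAE as [H1 _]; apply (H1 Us hG HUo HhG)).
  cut (hV <= hG). lra.
  destruct HVe as [NF [HNF HcvF]]. destruct HhG as [NG [HNG HcvG]].
  assert (Hc0 : 0 <= c).
  { specialize (Hcd 0%nat 0%nat). pose proof (Cmod_ge0 (Csub (G 0%nat 0%nat) (F 0%nat 0%nat))). lra. }
  assert (Hchain : forall n, covers_with A V n (NG (n + K)%nat)).
  { intro n. destruct (proj1 (HNG (n + K)%nat)) as [ws [Hlen Hws]].
    set (W := (n + K)%nat) in *.
    set (mw := fun w => epsilon (inhabits 0%nat) (fun m => word_set Us W w (ev m))).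
    set (idxV := fun rho => epsilon (inhabits 0%nat) (fun idx => forall rho', is_char A rho' ->
          close F rho rho' K s -> nth idx V (fun _ => False) rho')).
    assert (HidxV : forall rho, is_char A rho -> forall rho', is_char A rho' ->
          close F rho rho' K s -> nth (idxV rho) V (fun _ => False) rho').
    { intros rho Hr. apply (epsilon_spec (inhabits 0%nat) (fun idx => forall rho', is_char A rho' ->
          close F rho rho' K s -> nth idx V (fun _ => False) rho')). apply Hleb; auto. }
    set (fw := fun w => map (fun j => idxV (ev (j + mw w)%nat)) (seq 0 n)).
    exists (map fw ws). split. rewrite length_map; auto.
    intros rho Hr.
    set (l := flat_map (fun i => map (fun j => shiftn j (F i)) (seq 0 W)) (seq 0 (S K))).
    destruct (density A rho l (s / 8) HA Hr) as [p Hp].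
    { intros f Hf. unfold l in Hf. apply in_flat_map in Hf. destruct Hf as [i [_ Hf]].
      apply in_map_iff in Hf. destruct Hf as [j [<- _]]. apply (anq_shiftn A HA). apply gen_contains. }
    lra.
    destruct (Hws (ev p) (ev_char B p)) as [w [Hw Hwp]].
    assert (Hwm : word_set Us W w (ev (mw w))).
    { apply (epsilon_spec (inhabits 0%nat) (fun m => word_set Us W w (ev m))). exists p; auto. }
    set (m := mw w) in *.
    assert (Hclose : forall J i, (J < W)%nat -> (i <= K)%nat -> Cmod (Csub (F i (J + p)%nat) (F i (J + m)%nat)) < 3 * s / 4).
    { intros J i HJ Hi.
      specialize (Hwp J HJ). specialize (Hwm J HJ).
      pose proof (Hfine _ (nth_in_or _ _ _ Hwp) _ _ Hwp Hwm i Hi) as Hg.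
      rewrite !Amap_ev in Hg. unfold ev in Hg.
      pose proof (Hcd i (J + p)%nat). pose proof (Hcd i (J + m)%nat).
      pose proof (Cmod_sub_tri (F i (J + p)%nat) (G i (J + p)%nat) (F i (J + m)%nat)).
      pose proof (Cmod_sub_tri (G i (J + p)%nat) (G i (J + m)%nat) (F i (J + m)%nat)).
      rewrite (Cmod_Csub_sym (F i (J + p)%nat) (G i (J + p)%nat)) in H1. lra. }
    exists (fw w). split. apply in_map; auto.
    intros j Hj. unfold fw. rewrite nth_map_seq; auto.
    apply HidxV. apply ev_char. apply char_Amap; auto.
    intros i j' Hi Hj'.
    unfold Amap_iter, ev. rewrite shiftn_add, shiftn_app.
    assert (HJ : (j + j' < W)%nat) by (unfold W; lia).
    specialize (Hclose (j + j')%nat i HJ Hi).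
    assert (Hin : In (shiftn (j + j') (F i)) l).
    { unfold l. apply in_flat_map. exists i. split. apply in_seq; lia. apply (in_map (fun j0 => shiftn j0 (F i))). apply in_seq; lia. }
    specialize (Hp _ Hin). rewrite shiftn_app in Hp.
    change (mw w) with m. replace (j' + (j + m))%nat with (j + j' + m)%nat by lia.
    pose proof (Cmod_sub_tri (F i (j + j' + m)%nat) (F i (j + j' + p)%nat) (rho (shiftn (j + j') (F i)))).
    rewrite (Cmod_Csub_sym (F i (j + j' + m)%nat) (F i (j + j' + p)%nat)) in H. lra. }
  assert (HNFG : forall n, (NF n <= NG (n + K))%nat) by (intro n; apply (HNF n); apply Hchain).
  assert (HNF1 : forall n, (1 <= NF n)%nat) by (intro n; apply (covers_pos A V n (NF n)); apply HNF).
  apply Rle_cv_lim with (Un := fun n => ln (INR (NF (S n))) / INR (S n))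
    (Vn := fun n => (ln (INR (NG (S (n + K)))) / INR (S (n + K))) * (INR (S (n + K)) / INR (S n))); auto.
  - intro n. replace (ln (INR (NG (S (n + K)))) / INR (S (n + K)) * (INR (S (n + K)) / INR (S n)))
      with (ln (INR (NG (S (n + K)))) / INR (S n)).
    2:{ field. split; apply not_0_INR; lia. }
    unfold Rdiv. apply Rmult_le_compat_r. left; apply Rinv_0_lt_compat, lt_0_INR; lia.
    apply ln_le. apply lt_0_INR. specialize (HNF1 (S n)); lia.
    apply le_INR. replace (S (n + K)) with (S n + K)%nat by lia. apply HNFG.
  - replace hG with (hG * 1) by ring. apply CV_mult.
    apply (cv_shift (fun n => ln (INR (NG (S n))) / INR (S n)) hG K HcvG).
    apply cv_ratio.
Qed.
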